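(* For all complex $q$ with $|q|<1$, $$\sum_{n\ge0}\sum_{m\ge0}(-1)^m q^{\frac{n(n+3)}{2}+2nm+2m(m+1)}-\sum_{n<0}\sum_{m<0}(-1)^m q^{\frac{n(n+3)}{2}+2nm+2m(m+1)}=\frac{2(q^2;q^2)_\infty}{(1+q)(q;q^2)_\infty}-\frac{(q^2;q^2)_\infty}{(1+q)(-q^2;q^2)_\infty},$$ where the second double sum runs over all pairs of negative integers $n,m$.
   Context: For $n\in\mathbb N_0\cup\{\infty\}$, $(a;q)_n:=\prod_{j=0}^{n-1}(1-aq^j)$. *)

(* Defs.v *)
From Stdlib Require Import Reals ZArith.
Open Scope R_scope.

Definition Cx : Type := (R * R)%type.
Definition RtoC (x : R) : Cx := (x, 0).
Definition Czero : Cx := (0, 0).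
Definition Cone : Cx := (1, 0).
Definition Cadd (z w : Cx) : Cx := (fst z + fst w, snd z + snd w).
Definition Copp (z : Cx) : Cx := (- fst z, - snd z).
Definition Csub (z w : Cx) : Cx := Cadd z (Copp w).
Definition Cmul (z w : Cx) : Cx :=
  (fst z * fst w - snd z * snd w, fst z * snd w + snd z * fst w).
Definition Cnorm (z : Cx) : R := sqrt (fst z * fst z + snd z * snd z).
(** Multiplicative inverse (total; inverse of 0 is 0). *)
Definition Cinv (z : Cx) : Cx :=
  let d := fst z * fst z + snd z * snd z in (fst z / d, - snd z / d).
Definition Cdiv (z w : Cx) : Cx := Cmul z (Cinv w).

Fixpoint Cpow (z : Cx) (n : nat) : Cx :=
  match n with O => Cone | S k => Cmul z (Cpow z k) end.

Definition CpowZ (z : Cx) (k : Z) : Cx :=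
  match k with
  | Z0 => Cone
  | Zpos p => Cpow z (Pos.to_nat p)
  | Zneg p => Cinv (Cpow z (Pos.to_nat p))
  end.

Fixpoint Csum (f : nat -> Cx) (N : nat) : Cx :=
  match N with O => Czero | S k => Cadd (Csum f k) (f k) end.
Fixpoint Cprod (f : nat -> Cx) (N : nat) : Cx :=
  match N with O => Cone | S k => Cmul (Cprod f k) (f k) end.

Definition Ccv (u : nat -> Cx) (l : Cx) : Prop :=
  forall eps : R, eps > 0 ->
    exists N : nat, forall n : nat, (n >= N)%nat -> Cnorm (Csub (u n) l) < eps.

Definition qpoch (a q : Cx) (n : nat) : Cx :=
  Cprod (fun j => Csub Cone (Cmul a (Cpow q j))) n.

(** (a;q)_oo = l : the partial products converge to l. *)
Definition qpoch_inf_is (a q l : Cx) : Prop := Ccv (qpoch a q) l.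

(** The exponent n(n+3)/2 + 2nm + 2m(m+1) (n(n+3) is always even). *)
Definition expo (n m : Z) : Z :=
  (n * (n + 3) / 2 + 2 * n * m + 2 * m * (m + 1))%Z.

Definition term (q : Cx) (n m : Z) : Cx :=
  Cmul (CpowZ (Copp Cone) m) (CpowZ q (expo n m)).

(** Partial sum over the square 0 <= n,m < N of the first double sum,
    minus the partial sum over -N <= n,m <= -1 of the second one. *)
Definition partial_diff (q : Cx) (N : nat) : Cx :=
  Csub
    (Csum (fun n => Csum (fun m => term q (Z.of_nat n) (Z.of_nat m)) N) N)
    (Csum (fun n => Csum (fun m =>
        term q (- Z.of_nat (S n))%Z (- Z.of_nat (S m))%Z) N) N).

(* Main.v *)
From Pilot Require Import Defs.
From Stdlib Require Import Reals ZArith.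
Open Scope R_scope.
From Stdlib Require Import Lra Lia.
From Coquelicot Require Import Coquelicot.

Open Scope C_scope.

Lemma add_eq (z w : C) : Defs.Cadd z w = z + w. Proof. reflexivity. Qed.
Lemma mul_eq (z w : C) : Defs.Cmul z w = z * w. Proof. reflexivity. Qed.
Lemma opp_eq (z : C) : Defs.Copp z = - z. Proof. reflexivity. Qed.
Lemma sub_eq (z w : C) : Defs.Csub z w = z - w. Proof. reflexivity. Qed.
Lemma one_eq : Defs.Cone = RtoC 1. Proof. reflexivity. Qed.
Lemma zero_eq : Defs.Czero = RtoC 0. Proof. reflexivity. Qed.
Lemma RtoC_eq (x : R) : Defs.RtoC x = RtoC x. Proof. reflexivity. Qed.
Lemma pow_eq (z : C) n : Defs.Cpow z n = Cpow z n.
Proof. induction n; simpl; [reflexivity| rewrite mul_eq, IHn; reflexivity]. Qed.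
Lemma inv_eq (z : C) : Defs.Cinv z = Cinv z.
Proof. unfold Defs.Cinv, Cinv. simpl. f_equal; f_equal; ring. Qed.
Lemma div_eq (z w : C) : Defs.Cdiv z w = z / w.
Proof. unfold Defs.Cdiv. rewrite inv_eq. reflexivity. Qed.
Lemma norm_eq (z : C) : Cnorm z = Cmod z.
Proof. unfold Cnorm, Cmod. f_equal. simpl. ring. Qed.
Definition Cx_field_theory : Field_theory.field_theory (R:=Cx) (RtoC 0) (RtoC 1) Cplus Cmult Cminus Copp Cdiv Cinv (@eq Cx) := C_field_theory.
Add Field Cxfield : Cx_field_theory.

Open Scope C_scope.
Ltac cring0 := first [ring | (change (@eq Cx) with (@eq C); ring) | (change (@eq C) with (@eq Cx); ring)].
Ltac cring := first [cring0 | (repeat match goal with H := _ |- _ => clearbody H end; cring0)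
  | (repeat match goal with H : _ |- _ => clear H end; cring0)].
Ltac cfield := first [field | (change (@eq Cx) with (@eq C); field) | (change (@eq C) with (@eq Cx); field)].

Lemma Csum_S f n : Csum f (S n) = Csum f n + f n. Proof. reflexivity. Qed.
Lemma Csum_0 f : Csum f 0 = RtoC 0. Proof. reflexivity. Qed.
Lemma Cprod_S f n : Cprod f (S n) = Cprod f n * f n. Proof. reflexivity. Qed.
Lemma Cprod_0 f : Cprod f 0 = RtoC 1. Proof. reflexivity. Qed.

Lemma Csum_ext f g n : (forall k, (k < n)%nat -> f k = g k) -> Csum f n = Csum g n.
Proof. induction n; intros H. reflexivity. rewrite !Csum_S. rewrite IHn by (intros; apply H; lia). rewrite H by lia. reflexivity. Qed.
Lemma Cprod_ext f g n : (forall k, (k < n)%nat -> f k = g k) -> Cprod f n = Cprod g n.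
Proof. induction n; intros H. reflexivity. rewrite !Cprod_S. rewrite IHn by (intros; apply H; lia). rewrite H by lia. reflexivity. Qed.

Lemma Csum_add f g n : Csum (fun k => f k + g k) n = Csum f n + Csum g n.
Proof. induction n. rewrite !Csum_0. cring.
 rewrite !Csum_S, IHn. cring. Qed.
Lemma Csum_sub f g n : Csum (fun k => f k - g k) n = Csum f n - Csum g n.
Proof. induction n. rewrite !Csum_0. cring.
 rewrite !Csum_S, IHn. cring. Qed.
Lemma Csum_scal c f n : Csum (fun k => c * f k) n = c * Csum f n.
Proof. induction n. rewrite !Csum_0. cring.
 rewrite !Csum_S, IHn. cring. Qed.
Lemma Csum_zero n : Csum (fun _ => RtoC 0) n = RtoC 0.
Proof. induction n. reflexivity. rewrite Csum_S, IHn. cring. Qed.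
Lemma Cprod_mul f g n : Cprod (fun k => f k * g k) n = Cprod f n * Cprod g n.
Proof. induction n. rewrite !Cprod_0. cring.
 rewrite !Cprod_S, IHn. cring. Qed.

Lemma Csum_shift f n : Csum f (S n) = f O + Csum (fun k => f (S k)) n.
Proof. induction n. rewrite !Csum_S, !Csum_0. cring.
 rewrite Csum_S, IHn, Csum_S. cring. Qed.
Lemma Cprod_shift f n : Cprod f (S n) = f O * Cprod (fun k => f (S k)) n.
Proof. induction n. rewrite !Cprod_S, !Cprod_0. cring.
 rewrite Cprod_S, IHn, Cprod_S. cring. Qed.

Lemma Csum_split f a b : Csum f (a + b) = Csum f a + Csum (fun k => f (a + k)%nat) b.
Proof. induction b. rewrite Nat.add_0_r, Csum_0. cring.
 rewrite Nat.add_succ_r, !Csum_S, IHb. cring. Qed.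
Lemma Cprod_split f a b : Cprod f (a + b) = Cprod f a * Cprod (fun k => f (a + k)%nat) b.
Proof. induction b. rewrite Nat.add_0_r, Cprod_0. cring.
 rewrite Nat.add_succ_r, !Cprod_S, IHb. cring. Qed.

Lemma Csum_rev f n : Csum f n = Csum (fun k => f (n - S k)%nat) n.
Proof. induction n. reflexivity.
 rewrite Csum_S, Csum_shift. rewrite IHn. replace (S n - 1)%nat with n by lia.
 rewrite Cplus_comm. f_equal; try (apply Csum_ext; intros k Hk; f_equal; lia). Qed.
Lemma Cprod_rev f n : Cprod f n = Cprod (fun k => f (n - S k)%nat) n.
Proof. induction n. reflexivity.
 rewrite Cprod_S, Cprod_shift. rewrite IHn. replace (S n - 1)%nat with n by lia.
 rewrite Cmult_comm. f_equal; try (apply Cprod_ext; intros k Hk; f_equal; lia). Qed.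

Lemma Csum_swap (f : nat -> nat -> C) a b :
  Csum (fun i => Csum (fun j => f i j) b) a = Csum (fun j => Csum (fun i => f i j) a) b.
Proof. induction a. rewrite Csum_0. rewrite (Csum_ext _ (fun _ => RtoC 0)) by reflexivity. rewrite Csum_zero. reflexivity.
 rewrite Csum_S, IHa. rewrite <- Csum_add. reflexivity. Qed.

Lemma Csum_zero_ext f n : (forall k, (k < n)%nat -> f k = RtoC 0) -> Csum f n = RtoC 0.
Proof. intros H. rewrite (Csum_ext f (fun _ => RtoC 0)) by auto. apply Csum_zero. Qed.

Lemma Csum_trunc f N M : (N <= M)%nat ->
  Csum (fun k => if Nat.ltb k N then f k else RtoC 0) M = Csum f N.
Proof. intros H. replace M with (N + (M - N))%nat by lia. rewrite Csum_split.
 rewrite (Csum_zero_ext _ (M - N)).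
 rewrite (Csum_ext _ f N). cring.
 intros k Hk. destruct (Nat.ltb_spec k N); auto; lia.
 intros k Hk. cbv beta. destruct (Nat.ltb_spec (N+k) N); auto; lia. Qed.

Lemma Csum_shiftind f a M :
  Csum (fun r => if Nat.leb a r then f (r - a)%nat else RtoC 0) M =
  Csum (fun n => if Nat.ltb (n + a) M then f n else RtoC 0) M.
Proof. destruct (Nat.le_gt_cases a M).
 - replace M with (a + (M - a))%nat at 1 by lia. rewrite Csum_split.
   rewrite (Csum_zero_ext _ a).
   rewrite (Csum_ext _ f (M - a)).
   rewrite (Csum_ext _ (fun n => if Nat.ltb n (M - a) then f n else RtoC 0) M).
   rewrite Csum_trunc by lia. cring.
   + intros k Hk. destruct (Nat.ltb_spec (k+a) M), (Nat.ltb_spec k (M-a)); auto; lia.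
   + intros k Hk. cbv beta. destruct (Nat.leb_spec a (a+k)); [f_equal; lia| lia].
   + intros k Hk. destruct (Nat.leb_spec a k); auto; lia.
 - rewrite !Csum_zero_ext. reflexivity.
   + intros k Hk. destruct (Nat.ltb_spec (k+a) M); auto; lia.
   + intros k Hk. destruct (Nat.leb_spec a k); auto; lia.
Qed.
Lemma Csum_ltb_equiv f N M : (N <= M)%nat ->
  Csum (fun k => if Nat.ltb k N then f k else RtoC 0) M = Csum f N.
Proof. apply Csum_trunc. Qed.

Lemma Csum_pair f N : Csum f (2 * N) = Csum (fun K => f (2*K)%nat + f (S (2*K))) N.
Proof. induction N. reflexivity. replace (2 * S N)%nat with (S (S (2*N))) by lia.
 rewrite !Csum_S, IHN. cring. Qed.

Open Scope C_scope.

Fixpoint Rs (f : nat -> R) (n : nat) : R :=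
  match n with O => 0%R | S k => (Rs f k + f k)%R end.

Lemma Rs_le f g n : (forall k, (k < n)%nat -> f k <= g k) -> Rs f n <= Rs g n.
Proof. induction n; intros H; simpl. lra. assert (f n <= g n) by (apply H; lia).
 assert (Rs f n <= Rs g n) by (apply IHn; intros; apply H; lia). lra. Qed.
Lemma Rs_nonneg f n : (forall k, (k < n)%nat -> 0 <= f k) -> 0 <= Rs f n.
Proof. induction n; intros H; simpl. lra. assert (0 <= f n) by (apply H; lia).
 assert (0 <= Rs f n) by (apply IHn; intros; apply H; lia). lra. Qed.
Lemma Rs_scal c f n : Rs (fun k => c * f k)%R n = (c * Rs f n)%R.
Proof. induction n; simpl. ring. rewrite IHn. ring. Qed.
Lemma Cmod_Csum f n : Cmod (Csum f n) <= Rs (fun k => Cmod (f k)) n.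
Proof. induction n. rewrite Csum_0, Cmod_0. simpl. lra.
 rewrite Csum_S. simpl Rs. eapply Rle_trans. apply Cmod_triangle. lra. Qed.

Lemma geom_id b n : ((1 - b) * Rs (fun k => b ^ k)%R n = 1 - b ^ n)%R.
Proof. induction n; simpl. ring. rewrite Rmult_plus_distr_l, IHn. ring. Qed.
Lemma geom_le b n : (0 <= b < 1)%R -> (Rs (fun k => b ^ k)%R n <= / (1 - b))%R.
Proof. intros Hb. assert (H1 := geom_id b n). assert (0 <= b ^ n)%R by (apply pow_le; lra).
 apply (Rmult_le_reg_l (1 - b)). lra. rewrite H1, Rinv_r by lra. lra. Qed.
Lemma Rs_ext f g n : (forall k, (k < n)%nat -> f k = g k) -> Rs f n = Rs g n.
Proof. induction n; intros H; simpl. auto. rewrite IHn by (intros; apply H; lia). rewrite H by lia. auto. Qed.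
Lemma geom_le2 c b a n : (0 <= c)%R -> (0 <= b < 1)%R ->
  Rs (fun k => c * b ^ (a + k))%R n <= (c * b ^ a / (1 - b))%R.
Proof. intros Hc Hb. rewrite (Rs_ext _ (fun k => (c * b ^ a) * b ^ k)%R).
 rewrite Rs_scal. unfold Rdiv. apply Rmult_le_compat_l. apply Rmult_le_pos; auto. apply pow_le; lra.
 apply geom_le; auto. intros k _. rewrite pow_add. ring. Qed.

Lemma pow_small b : (0 <= b < 1)%R -> forall eps, (eps > 0)%R -> exists N, forall n, (n >= N)%nat -> (b ^ n < eps)%R.
Proof. intros Hb eps He. destruct (pow_lt_1_zero b) with (y := eps) as [N HN]. rewrite Rabs_right; lra. lra.
 exists N. intros n Hn. specialize (HN n Hn). rewrite Rabs_right in HN; auto. apply Rle_ge, pow_le; lra. Qed.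
Lemma Kpow_small K b : (0 <= b < 1)%R -> forall eps, (eps > 0)%R -> exists N, forall n, (n >= N)%nat -> (K * b ^ n < eps)%R.
Proof. intros Hb eps He. destruct (pow_small b Hb (eps / (Rabs K + 1))) as [N HN].
 apply Rdiv_lt_0_compat; [lra| pose proof (Rabs_pos K); lra].
 exists N. intros n Hn. specialize (HN n Hn). assert (0 <= b ^ n) by (apply pow_le; lra).
 assert (K * b ^ n <= (Rabs K + 1) * b ^ n). apply Rmult_le_compat_r; auto. pose proof (Rle_abs K); lra.
 assert ((Rabs K + 1) * b ^ n < (Rabs K + 1) * (eps / (Rabs K + 1))). apply Rmult_lt_compat_l. pose proof (Rabs_pos K); lra. auto.
 field_simplify in H1. lra. pose proof (Rabs_pos K); lra. Qed.

Definition cv (u : nat -> C) (l : C) : Prop :=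
  forall eps : R, (eps > 0)%R -> exists N : nat, forall n : nat, (n >= N)%nat -> Cmod (u n - l) < eps.

Lemma Ccv_cv u l : cv u l -> Ccv u l.
Proof. intros H eps He. destruct (H eps He) as [N HN]. exists N. intros n Hn. rewrite norm_eq, sub_eq. auto. Qed.
Lemma cv_Ccv u l : Ccv u l -> cv u l.
Proof. intros H eps He. destruct (H eps He) as [N HN]. exists N. intros n Hn. rewrite <- norm_eq, <- sub_eq. auto. Qed.

Lemma cv_bound u l K b N0 : (0 <= b < 1)%R -> (forall n, (n >= N0)%nat -> Cmod (u n - l) <= K * b ^ n) -> cv u l.
Proof. intros Hb H eps He. destruct (Kpow_small K b Hb eps He) as [N HN]. exists (max N N0). intros n Hn.
 eapply Rle_lt_trans. apply H; lia. apply HN; lia. Qed.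

Lemma cv_const c : cv (fun _ => c) c.
Proof. intros eps He. exists O. intros. replace (c - c) with (RtoC 0) by cring. rewrite Cmod_0. lra. Qed.

Lemma cv_ext u v l : (exists N, forall n, (n >= N)%nat -> u n = v n) -> cv u l -> cv v l.
Proof. intros [N0 H0] H eps He. destruct (H eps He) as [N HN]. exists (max N N0). intros n Hn.
 rewrite <- H0 by lia. apply HN; lia. Qed.

Lemma cv_add u v a b : cv u a -> cv v b -> cv (fun n => u n + v n) (a + b).
Proof. intros Hu Hv eps He. destruct (Hu (eps/2)%R) as [N1 H1]. lra. destruct (Hv (eps/2)%R) as [N2 H2]. lra.
 exists (max N1 N2). intros n Hn. replace (u n + v n - (a + b)) with ((u n - a) + (v n - b)) by cring.
 eapply Rle_lt_trans. apply Cmod_triangle. assert (Cmod (u n - a) < eps/2)%R by (apply H1; lia).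
 assert (Cmod (v n - b) < eps/2)%R by (apply H2; lia). lra. Qed.

Lemma cv_opp u a : cv u a -> cv (fun n => - u n) (- a).
Proof. intros Hu eps He. destruct (Hu eps He) as [N H]. exists N. intros n Hn.
 replace (- u n - - a) with (- (u n - a)) by cring. rewrite Cmod_opp. auto. Qed.

Lemma cv_sub u v a b : cv u a -> cv v b -> cv (fun n => u n - v n) (a - b).
Proof. intros Hu Hv. apply (cv_add _ _ _ _ Hu (cv_opp _ _ Hv)). Qed.

Lemma cv_bounded u a : cv u a -> exists M, (0 < M)%R /\ forall n, Cmod (u n) <= M.
Proof. intros Hu. destruct (Hu 1%R) as [N HN]. lra.
 assert (exists M0, (0 <= M0)%R /\ forall n, (n < N)%nat -> Cmod (u n) <= M0) as [M0 [HM0 HM]].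
 { clear HN. induction N. exists 0%R. split. lra. intros; lia.
   destruct IHN as [M1 [H1 H2]]. exists (Rmax M1 (Cmod (u N))). split. eapply Rle_trans; [apply H1|apply Rmax_l].
   intros n Hn. destruct (Nat.eq_dec n N). subst. apply Rmax_r. eapply Rle_trans; [apply H2; lia| apply Rmax_l]. }
 exists (M0 + Cmod a + 1)%R. split. pose proof (Cmod_ge_0 a); lra. intros n. destruct (le_lt_dec N n).
 - assert (Cmod (u n - a) < 1)%R by (apply HN; lia). replace (u n) with ((u n - a) + a) by cring.
   eapply Rle_trans. apply Cmod_triangle. lra.
 - assert (Cmod (u n) <= M0) by auto. pose proof (Cmod_ge_0 a). lra. Qed.

Lemma cv_mul u v a b : cv u a -> cv v b -> cv (fun n => u n * v n) (a * b).
Proof. intros Hu Hv. destruct (cv_bounded u a Hu) as [M [HM HMb]].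
 intros eps He. set (e1 := (eps / (2 * (Cmod b + 1)))%R). set (e2 := (eps / (2 * M))%R).
 assert (0 < Cmod b + 1)%R by (pose proof (Cmod_ge_0 b); lra).
 destruct (Hu e1) as [N1 H1]. unfold e1. apply Rdiv_lt_0_compat; lra.
 destruct (Hv e2) as [N2 H2]. unfold e2. apply Rdiv_lt_0_compat; lra.
 exists (max N1 N2). intros n Hn. replace (u n * v n - a * b) with (u n * (v n - b) + (u n - a) * b) by cring.
 eapply Rle_lt_trans. apply Cmod_triangle. rewrite !Cmod_mult.
 assert (Cmod (u n - a) < e1) by (apply H1; lia). assert (Cmod (v n - b) < e2) by (apply H2; lia).
 assert (Cmod (u n) * Cmod (v n - b) <= M * e2)%R. apply Rmult_le_compat; auto using Cmod_ge_0. lra.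
 assert (Cmod (u n - a) * Cmod b <= e1 * (Cmod b + 1))%R. apply Rmult_le_compat; auto using Cmod_ge_0. lra. lra.
 assert (M * e2 = eps / 2)%R by (unfold e2; field; lra). assert (e1 * (Cmod b + 1) = eps / 2)%R by (unfold e1; field; lra).
 assert (0 <= Cmod (u n - a))%R by apply Cmod_ge_0.
 assert (Cmod (u n - a) * Cmod b < e1 * (Cmod b + 1))%R.
 { apply Rle_lt_trans with (Cmod (u n - a) * (Cmod b + 1))%R. apply Rmult_le_compat_l; lra.
   apply Rmult_lt_compat_r; lra. }
 lra. Qed.

Lemma cv_scal c u a : cv u a -> cv (fun n => c * u n) (c * a).
Proof. intros Hu. apply (cv_mul _ _ _ _ (cv_const c) Hu). Qed.

Lemma cv_unique u a b : cv u a -> cv u b -> a = b.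
Proof. intros Ha Hb. destruct (Req_dec (Cmod (a - b)) 0) as [E|E].
 - apply Cmod_eq_0 in E. replace a with ((a - b) + b) by cring. rewrite E. cring.
 - assert (Hp : (Cmod (a - b) / 2 > 0)%R). pose proof (Cmod_ge_0 (a-b)). lra.
   destruct (Ha _ Hp) as [N1 H1]. destruct (Hb _ Hp) as [N2 H2].
   assert (Cmod (u (max N1 N2) - a) < Cmod (a - b) / 2)%R by (apply H1; lia).
   assert (Cmod (u (max N1 N2) - b) < Cmod (a - b) / 2)%R by (apply H2; lia).
   pose proof (Cmod_triangle (- (u (max N1 N2) - a)) (u (max N1 N2) - b)) as T.
   rewrite Cmod_opp in T. replace (- (u (max N1 N2) - a) + (u (max N1 N2) - b)) with (a - b) in T by cring.
   lra. Qed.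

Lemma cv_comp u a (phi : nat -> nat) : cv u a -> (forall N, exists M, forall n, (n >= M)%nat -> (phi n >= N)%nat) ->
  cv (fun n => u (phi n)) a.
Proof. intros Hu Hp eps He. destruct (Hu eps He) as [N HN]. destruct (Hp N) as [M HM]. exists M. intros n Hn. apply HN, HM, Hn. Qed.

Lemma cv_inv u a : cv u a -> a <> RtoC 0 -> cv (fun n => / u n) (/ a).
Proof. intros Hu Ha. assert (Hm : (0 < Cmod a)%R) by (apply Cmod_gt_0; auto).
 destruct (Hu (Cmod a / 2)%R) as [N0 H0]. lra.
 assert (Hb : forall n, (n >= N0)%nat -> (Cmod a / 2 <= Cmod (u n))%R).
 { intros n Hn. specialize (H0 n Hn). pose proof (Cmod_triangle (u n) (- (u n - a))).
   replace (u n + - (u n - a)) with a in H by cring. rewrite Cmod_opp in H. lra. }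
 intros eps He. destruct (Hu (eps * (Cmod a * Cmod a / 2))%R) as [N1 H1].
 apply Rmult_lt_0_compat. lra. apply Rmult_lt_0_compat; [nra|lra].
 exists (max N0 N1). intros n Hn. assert (Hun : (Cmod a / 2 <= Cmod (u n))%R) by (apply Hb; lia).
 assert (un0 : u n <> RtoC 0). { intro E. rewrite E, Cmod_0 in Hun. lra. }
 replace (/ u n - / a) with ((a - u n) / (u n * a)) by (cfield; auto).
 rewrite Cmod_div. rewrite Cmod_mult. 2:{ apply Cmult_neq_0; auto. }
 assert (Cmod (a - u n) < eps * (Cmod a * Cmod a / 2))%R.
 { replace (a - u n) with (- (u n - a)) by cring. rewrite Cmod_opp. apply H1; lia. }
 assert (HY : (Cmod a * Cmod a / 2 <= Cmod (u n) * Cmod a)%R) by nra.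
 apply (Rmult_lt_reg_r (Cmod (u n) * Cmod a)). nra.
 replace (Cmod (a - u n) / (Cmod (u n) * Cmod a) * (Cmod (u n) * Cmod a))%R with (Cmod (a - u n)) by (field; split; lra).
 nra. Qed.

Lemma cv_Csum (f : nat -> nat -> C) (g : nat -> C) K :
  (forall k, (k < K)%nat -> cv (fun n => f n k) (g k)) -> cv (fun n => Csum (f n) K) (Csum g K).
Proof. induction K; intros H. apply (cv_ext (fun _ => Csum g 0)). exists O. reflexivity. apply cv_const.
 apply (cv_ext (fun n => Csum (f n) K + f n K)). exists O. reflexivity. rewrite Csum_S.
 apply cv_add. apply IHK. intros; apply H; lia. apply H; lia. Qed.

Lemma cv_Cmod_le u a B : cv u a -> (forall n, Cmod (u n) <= B) -> Cmod a <= B.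
Proof. intros Hu H. destruct (Rle_lt_dec (Cmod a) B) as [|Hl]; auto.
 destruct (Hu (Cmod a - B)%R) as [N HN]. lra. specialize (HN N (le_n N)). specialize (H N).
 pose proof (Cmod_triangle (u N) (- (u N - a))). replace (u N + - (u N - a)) with a in H0 by cring.
 rewrite Cmod_opp in H0. lra. Qed.
Lemma cv_Cmod_ge u a B : cv u a -> (forall n, B <= Cmod (u n)) -> B <= Cmod a.
Proof. intros Hu H. destruct (Rle_lt_dec B (Cmod a)) as [|Hl]; auto.
 destruct (Hu (B - Cmod a)%R) as [N HN]. lra. specialize (HN N (le_n N)). specialize (H N).
 pose proof (Cmod_triangle (u N - a) a). replace (u N - a + a) with (u N) in H0 by cring. lra. Qed.

Close Scope C_scope. Open Scope R_scope.

Lemma real_tel (x : nat -> R) c b n k : (forall n, Rabs (x (S n) - x n) <= c * b ^ n) ->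
  Rabs (x (n + k)%nat - x n) <= Rs (fun j => c * b ^ (n + j)) k.
Proof. intros H. induction k. simpl. rewrite Nat.add_0_r. unfold Rminus. rewrite Rplus_opp_r, Rabs_R0. lra.
 simpl. rewrite Nat.add_succ_r. specialize (H (n + k)%nat).
 replace (x (S (n + k)) - x n) with ((x (S (n+k)) - x (n+k)%nat) + (x (n + k)%nat - x n)) by ring.
 eapply Rle_trans. apply Rabs_triang. lra. Qed.

Lemma real_geom_cauchy (x : nat -> R) c b : 0 <= b < 1 -> 0 <= c ->
  (forall n, Rabs (x (S n) - x n) <= c * b ^ n) ->
  exists l, forall n, Rabs (x n - l) <= c * b ^ n / (1 - b).
Proof. intros Hb Hc H.
 assert (Hk : forall n k, Rabs (x (n + k)%nat - x n) <= c * b ^ n / (1 - b)).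
 { intros n k. eapply Rle_trans. apply real_tel; auto. apply geom_le2; auto. }
 assert (Hcau : Cauchy_crit x).
 { intros eps He. destruct (Kpow_small (c / (1 - b)) b Hb (eps/2)) as [N HN]. lra.
   exists N. intros n m Hn Hm. unfold Rdist.
   assert (A1 := Hk N (n - N)%nat). assert (A2 := Hk N (m - N)%nat).
   replace (N + (n - N))%nat with n in A1 by lia. replace (N + (m - N))%nat with m in A2 by lia.
   specialize (HN N (le_n N)). replace (c / (1 - b) * b ^ N) with (c * b ^ N / (1 - b)) in HN by (field; lra).
   replace (x n - x m) with ((x n - x N) - (x m - x N)) by ring.
   eapply Rle_lt_trans. apply Rabs_triang. rewrite Rabs_Ropp. lra. }
 destruct (Rcomplete.R_complete x Hcau) as [l Hl]. exists l. intros n.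
 destruct (Rle_lt_dec (Rabs (x n - l)) (c * b ^ n / (1 - b))) as [|Hlt]; auto.
 destruct (Hl (Rabs (x n - l) - c * b ^ n / (1 - b))) as [M HM]. lra.
 specialize (HM (n + M)%nat ltac:(lia)). unfold R_dist in HM. specialize (Hk n M).
 replace (x n - l) with (-(x (n + M)%nat - x n) + (x (n + M)%nat - l)) in Hlt by ring.
 pose proof (Rabs_triang (-(x (n + M)%nat - x n)) (x (n + M)%nat - l)). rewrite Rabs_Ropp in H0.
 replace (x n - l) with (-(x (n + M)%nat - x n) + (x (n + M)%nat - l)) in HM by ring. lra. Qed.

Lemma sqrt2_le2 : sqrt 2 <= 2.
Proof. rewrite <- (sqrt_square 2) at 2 by lra. apply sqrt_le_1_alt. lra. Qed.

Lemma cplx_geom_cauchy (u : nat -> C) c b : 0 <= b < 1 -> 0 <= c ->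
  (forall n, Cmod (u (S n) - u n)%C <= c * b ^ n) ->
  exists l, cv u l /\ forall n, Cmod (u n - l)%C <= 2 * c * b ^ n / (1 - b).
Proof. intros Hb Hc H.
 destruct (real_geom_cauchy (fun n => fst (u n)) c b Hb Hc) as [l1 H1].
 { intros n. eapply Rle_trans; [|apply (H n)]. eapply Rle_trans; [|apply Rmax_Cmod]. simpl. apply Rmax_l. }
 destruct (real_geom_cauchy (fun n => snd (u n)) c b Hb Hc) as [l2 H2].
 { intros n. eapply Rle_trans; [|apply (H n)]. eapply Rle_trans; [|apply Rmax_Cmod]. simpl. apply Rmax_r. }
 assert (Hbd : forall n, Cmod (u n - (l1, l2))%C <= 2 * c * b ^ n / (1 - b)).
 { intros n. eapply Rle_trans. apply Cmod_2Rmax. simpl.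
   assert (B: Rmax (Rabs (fst (u n) + - l1)) (Rabs (snd (u n) + - l2)) <= c * b ^ n / (1 - b)).
   { apply Rmax_lub. apply (H1 n). apply (H2 n). }
   assert (0 <= c * b ^ n / (1 - b)). { apply Rmult_le_pos. apply Rmult_le_pos; auto. apply pow_le; lra. apply Rlt_le, Rinv_0_lt_compat; lra. }
   assert (0 <= Rmax (Rabs (fst (u n) + - l1)) (Rabs (snd (u n) + - l2))). { eapply Rle_trans. apply Rabs_pos. apply Rmax_l. }
   pose proof sqrt2_le2. pose proof Rlt_sqrt2_0.
   replace (2 * c * b ^ n / (1 - b)) with (2 * (c * b ^ n / (1 - b))) by (field; lra). nra. }
 exists (l1, l2). split; auto. apply (cv_bound _ _ (2 * c / (1 - b)) b O Hb).
 intros n _. replace (2 * c / (1 - b) * b ^ n) with (2 * c * b ^ n / (1 - b)) by (field; lra). auto. Qed.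

Close Scope C_scope. Open Scope R_scope.

Lemma pow_le1 x k : 0 <= x <= 1 -> x ^ k <= 1.
Proof. intros H. induction k; simpl. lra. assert (0 <= x ^ k) by (apply pow_le; lra). nra. Qed.

Fixpoint Rp (f : nat -> R) (n : nat) : R :=
  match n with O => 1 | S k => Rp f k * f k end.

Lemma Rp_ext f g n : (forall k, (k < n)%nat -> f k = g k) -> Rp f n = Rp g n.
Proof. induction n; intros H; simpl. auto. rewrite IHn by (intros; apply H; lia). rewrite H by lia. auto. Qed.
Lemma Rp_split f a b : Rp f (a + b) = Rp f a * Rp (fun k => f (a + k)%nat) b.
Proof. induction b; simpl. rewrite Nat.add_0_r. ring. rewrite Nat.add_succ_r. simpl. rewrite IHb. ring. Qed.
Lemma Rp_nonneg f n : (forall k, 0 <= f k) -> 0 <= Rp f n.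
Proof. intros H. induction n; simpl. lra. apply Rmult_le_pos; auto. Qed.
Lemma Rp_pos f n : (forall k, 0 < f k) -> 0 < Rp f n.
Proof. intros H. induction n; simpl. lra. apply Rmult_lt_0_compat; auto. Qed.
Lemma Rp_le1 f n : (forall k, 0 <= f k <= 1) -> Rp f n <= 1.
Proof. intros H. induction n; simpl. lra. assert (0 <= Rp f n) by (apply Rp_nonneg; intros; apply H).
 specialize (H n). nra. Qed.
Lemma Rp_mono f g n : (forall k, 0 <= f k <= g k) -> Rp f n <= Rp g n.
Proof. intros H. induction n; simpl. lra. assert (0 <= Rp f n) by (apply Rp_nonneg; intros; apply H).
 specialize (H n). apply Rmult_le_compat; lra. Qed.

Lemma Cmod_Cprod f n : Cmod (Cprod f n) = Rp (fun k => Cmod (f k)) n.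
Proof. induction n. rewrite Cprod_0, Cmod_1. reflexivity. rewrite Cprod_S, Cmod_mult, IHn. reflexivity. Qed.

Lemma Rp_exp x n : (forall k, 0 <= x k) -> Rp (fun k => 1 + x k) n <= exp (Rs x n).
Proof. intros H. induction n; simpl. rewrite exp_0. lra.
 rewrite exp_plus. apply Rmult_le_compat. apply Rp_nonneg. intros; specialize (H k); lra. specialize (H n); lra. auto.
 destruct (Req_dec (x n) 0) as [E|E]. rewrite E, exp_0. lra. left. apply exp_ineq1. auto. Qed.

Lemma weier y n : (forall k, 0 <= y k <= 1) -> 1 - Rs y n <= Rp (fun k => 1 - y k) n.
Proof. intros H. induction n; simpl. lra.
 assert (0 <= Rp (fun k => 1 - y k) n) by (apply Rp_nonneg; intros; specialize (H k); lra).
 pose proof (H n) as Hyn. assert (0 <= Rp (fun k => 1 - y k) n * (1 - y n)) by (apply Rmult_le_pos; lra).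
 destruct (Rle_lt_dec 1 (Rs y n)). lra.
 assert ((1 - Rs y n) * (1 - y n) <= Rp (fun k => 1 - y k) n * (1 - y n)) by (apply Rmult_le_compat_r; lra).
 assert (0 <= Rs y n * y n). apply Rmult_le_pos; [|lra]. apply Rs_nonneg; intros k _; destruct (H k); lra. nra. Qed.

Definition qp (a b : C) (n : nat) : C := Cprod (fun j => (RtoC 1 - a * b ^ j)%C) n.
Lemma qpoch_qp a b n : qpoch a b n = qp a b n.
Proof. unfold qpoch, qp. apply Cprod_ext. intros k _. rewrite sub_eq, mul_eq, pow_eq. reflexivity. Qed.
Lemma qp_S a b n : qp a b (S n) = (qp a b n * (RtoC 1 - a * b ^ n))%C.
Proof. reflexivity. Qed.

Lemma exp_le x y : x <= y -> exp x <= exp y.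
Proof. intros [H|H]. left; apply exp_increasing; auto. subst; lra. Qed.

Lemma qp_upper a b : Cmod b < 1 -> exists K, 0 < K /\ forall n, Cmod (qp a b n) <= K.
Proof. intros Hb. set (al := Cmod a). set (be := Cmod b). pose proof (Cmod_ge_0 a). pose proof (Cmod_ge_0 b).
 exists (exp (al / (1 - be))). split. apply exp_pos. intros n. unfold qp. rewrite Cmod_Cprod.
 eapply Rle_trans. apply (Rp_mono _ (fun k => 1 + al * be ^ k)). intros k. split. apply Cmod_ge_0.
 eapply Rle_trans. apply Cmod_triangle. rewrite Cmod_opp, Cmod_1, Cmod_mult, Cmod_pow. unfold al, be. lra.
 eapply Rle_trans. apply Rp_exp. intros; apply Rmult_le_pos; auto. apply pow_le; auto.
 apply exp_le. rewrite (Rs_ext _ (fun k => al * be ^ (0 + k))) by auto.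
 replace (al / (1 - be)) with (al * be ^ 0 / (1 - be)) by (simpl; field; unfold be; lra).
 apply geom_le2; unfold be, al; auto. Qed.

Lemma qp_conv a b : Cmod b < 1 -> exists P, cv (qp a b) P.
Proof. intros Hb. destruct (qp_upper a b Hb) as [K [HK HKb]].
 destruct (cplx_geom_cauchy (qp a b) (K * Cmod a) (Cmod b)) as [P [HP _]].
 split; auto; apply Cmod_ge_0. apply Rmult_le_pos; [lra| apply Cmod_ge_0].
 intros n. rewrite qp_S. replace (qp a b n * (RtoC 1 - a * b ^ n) - qp a b n)%C with (- (qp a b n * (a * b ^ n)))%C by cring.
 rewrite Cmod_opp, Cmod_mult, Cmod_mult, Cmod_pow. rewrite <- Rmult_assoc. apply Rmult_le_compat_r. apply pow_le, Cmod_ge_0.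
 apply Rmult_le_compat_r. apply Cmod_ge_0. auto. exists P; auto. Qed.

Lemma Rp_lower al be : 0 <= al < 1 -> 0 <= be < 1 -> exists c, 0 < c /\ forall n, c <= Rp (fun j => 1 - al * be ^ j) n.
Proof. intros Ha Hb. set (f := fun j => 1 - al * be ^ j).
 assert (Hf : forall j, 0 < f j <= 1). { intros j. unfold f. assert (0 <= be ^ j <= 1). split. apply pow_le; lra. apply pow_le1; lra.
   split; nra. }
 destruct (Kpow_small (al / (1 - be)) be Hb (1/2)) as [J HJ]. lra. specialize (HJ J (le_n J)).
 set (c0 := Rp f J). assert (Hc0 : 0 < c0) by (apply Rp_pos; intros; apply Hf).
 exists (c0 / 2). split. lra. intros n. destruct (le_lt_dec J n).
 - replace n with (J + (n - J))%nat by lia. rewrite Rp_split. fold c0.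
   assert (1/2 <= Rp (fun k => f (J + k)%nat) (n - J)).
   { eapply Rle_trans. 2:{ apply (weier (fun k => al * be ^ (J + k))). intros k. specialize (Hf (J+k)%nat). unfold f in Hf.
       assert (0 <= be ^ (J + k)) by (apply pow_le; lra). split; nra. }
     pose proof (geom_le2 al be J (n - J) ltac:(lra) Hb).
     replace (al / (1 - be) * be ^ J) with (al * be ^ J / (1 - be)) in HJ by (field; lra). lra. }
   nra.
 - assert (c0 <= Rp f n). { unfold c0. replace J with (n + (J - n))%nat by lia. rewrite Rp_split.
     assert (0 <= Rp f n) by (apply Rp_nonneg; intros; pose proof (Hf k); lra).
     assert (Rp (fun k => f (n + k)%nat) (J - n) <= 1) by (apply Rp_le1; intros; pose proof (Hf (n+k)%nat); lra).
     assert (0 <= Rp (fun k => f (n + k)%nat) (J - n)) by (apply Rp_nonneg; intros; pose proof (Hf (n+k)%nat); lra). nra. }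
   lra. Qed.

Lemma qp_lower a b : Cmod a < 1 -> Cmod b < 1 -> exists c, 0 < c /\ forall n, c <= Cmod (qp a b n).
Proof. intros Ha Hb. destruct (Rp_lower (Cmod a) (Cmod b)) as [c [Hc H]]. split; auto; apply Cmod_ge_0. split; auto; apply Cmod_ge_0.
 exists c. split; auto. intros n. eapply Rle_trans. apply (H n). unfold qp. rewrite Cmod_Cprod. apply Rp_mono.
 intros k. split. assert (Cmod b ^ k <= 1) by (apply pow_le1; split; [apply Cmod_ge_0|lra]).
 pose proof (Cmod_ge_0 a). assert (0 <= Cmod b ^ k) by (apply pow_le, Cmod_ge_0). nra.
 pose proof (Cmod_triangle (RtoC 1 - a * b ^ k) (a * b ^ k)). replace (RtoC 1 - a * b ^ k + a * b ^ k)%C with (RtoC 1) in H0 by cring.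
 rewrite Cmod_1, Cmod_mult, Cmod_pow in H0. lra. Qed.

Lemma qp_lim_nonzero a b P : Cmod a < 1 -> Cmod b < 1 -> cv (qp a b) P -> P <> RtoC 0.
Proof. intros Ha Hb HP. destruct (qp_lower a b Ha Hb) as [c [Hc H]]. pose proof (cv_Cmod_ge _ _ _ HP H).
 intro E. rewrite E, Cmod_0 in H0. lra. Qed.

Open Scope C_scope.

Fixpoint G (p : C) (N k : nat) : C :=
  match N, k with
  | _, O => RtoC 1
  | O, S _ => RtoC 0
  | S N', S k' => G p N' (S k') + p ^ (N' - k') * G p N' k'
  end.

Fixpoint tri (n : nat) : nat := match n with O => O | S k => (tri k + k)%nat end.

Lemma tri_add a b : tri (a + b) = (tri a + tri b + a * b)%nat.
Proof. induction b; simpl. rewrite Nat.add_0_r. lia. rewrite Nat.add_succ_r. simpl. rewrite IHb. lia. Qed.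
Lemma tri_sq s : (2 * tri s + s = s * s)%nat.
Proof. induction s; simpl; lia. Qed.

Lemma G_0 p N : G p N 0 = RtoC 1. Proof. destruct N; reflexivity. Qed.
Lemma G_SS p N k : G p (S N) (S k) = G p N (S k) + p ^ (N - k) * G p N k. Proof. reflexivity. Qed.

Lemma G_big p N k : (N < k)%nat -> G p N k = RtoC 0.
Proof. revert k. induction N; intros k Hk. destruct k. lia. reflexivity.
 destruct k. lia. rewrite G_SS, !IHN by lia. cring. Qed.
Lemma G_diag p N : G p N N = RtoC 1.
Proof. induction N. reflexivity. rewrite G_SS, G_big by lia. rewrite IHN, Nat.sub_diag. simpl. cring. Qed.

Lemma qbin p x N : qp (- x) p N = Csum (fun k => G p N k * p ^ (tri k) * x ^ k) (S N).
Proof. induction N.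
 - unfold qp. rewrite Cprod_0, Csum_S, Csum_0. simpl. cring.
 - rewrite qp_S, IHN. symmetry. rewrite (Csum_shift _ (S N)). cbv beta. rewrite G_0.
   rewrite (Csum_ext (fun k => G p (S N) (S k) * p ^ tri (S k) * x ^ S k)
      (fun k => G p N (S k) * p ^ tri (S k) * x ^ (S k) + x * p ^ N * (G p N k * p ^ tri k * x ^ k))).
   2:{ intros k Hk. rewrite G_SS. simpl tri. rewrite !Cpow_add_r.
       replace (p ^ N) with (p ^ (N - k) * p ^ k) by (rewrite <- Cpow_add_r; f_equal; lia). simpl. cring. }
   rewrite Csum_add, Csum_scal.
   assert (E : Csum (fun k => G p N (S k) * p ^ tri (S k) * x ^ S k) (S N) =
               Csum (fun k => G p N k * p ^ tri k * x ^ k) (S N) - RtoC 1).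
   { rewrite (Csum_S (fun k => G p N (S k) * p ^ tri (S k) * x ^ S k) N).
     rewrite (G_big p N (S N)) by lia.
     rewrite (Csum_shift (fun k => G p N k * p ^ tri k * x ^ k) N). rewrite G_0. simpl. cring. }
   rewrite E. simpl. cring.
Qed.

Lemma G_closed p : forall n k m, (k + m = n)%nat -> G p n k * qp p p k * qp p p m = qp p p n.
Proof. induction n; intros k m H.
 - assert (k = 0%nat) by lia. assert (m = 0%nat) by lia. subst. unfold qp. rewrite !Cprod_0. simpl. cring.
 - destruct k as [|k']. rewrite G_0. simpl in H. subst. replace (qp p p 0) with (RtoC 1) by reflexivity. cring.
   destruct m as [|m']. rewrite Nat.add_0_r in H. injection H as H. subst. rewrite G_diag. replace (qp p p 0) with (RtoC 1) by reflexivity. cring.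
   rewrite G_SS. replace (n - k')%nat with (S m') by lia.
   assert (I1 := IHn (S k') m' ltac:(lia)). assert (I2 := IHn k' (S m') ltac:(lia)).
   rewrite !qp_S in *.
   assert (E : (G p n (S k') + p ^ S m' * G p n k') * (qp p p k' * (RtoC 1 - p * p ^ k')) *
     (qp p p m' * (RtoC 1 - p * p ^ m')) = (G p n (S k') * (qp p p k' * (RtoC 1 - p * p ^ k')) * qp p p m') * (RtoC 1 - p * p ^ m')
      + p ^ S m' * (RtoC 1 - p * p ^ k') * (G p n k' * qp p p k' * (qp p p m' * (RtoC 1 - p * p ^ m')))) by cring.
   rewrite E, I1, I2. replace (p ^ n) with (p ^ k' * p ^ (S m')) by (rewrite <- Cpow_add_r; f_equal; lia).
   simpl. cring.
Qed.

Open Scope C_scope.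

Lemma Cmult_eq_reg_l (a x y : C) : a <> RtoC 0 -> a * x = a * y -> x = y.
Proof. intros Ha H. transitivity (/ a * (a * x)). cfield. auto. rewrite H. cfield. auto. Qed.

Lemma Cprod_const Y n : Cprod (fun _ => Y) n = Y ^ n.
Proof. induction n. reflexivity. rewrite Cprod_S, IHn. simpl. cring. Qed.
Lemma Cprod_pow p n : Cprod (fun j => p ^ j) n = p ^ (tri n).
Proof. induction n. reflexivity. rewrite Cprod_S, IHn. simpl. rewrite Cpow_add_r. cring. Qed.

Lemma term_id1 p Y z n j : Y * p ^ n = z ->
  p ^ tri (n + j) * Y ^ (n + j) = (Y ^ n * p ^ tri n) * (z ^ j * p ^ tri j).
Proof. intros HY. rewrite tri_add, !Cpow_add_r, Cpow_mult_r, <- HY, Cpow_mult_l. cring. Qed.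

Lemma term_id2 p Y x m s : p <> RtoC 0 -> Y * x * p ^ (m + s) = p ->
  p ^ tri m * Y ^ m = (Y ^ (m + s) * p ^ tri (m + s)) * (x ^ s * p ^ tri s).
Proof. intros Hp HY.
 assert (B : Y ^ s * x ^ s * p ^ (2 * tri s + m * s) = RtoC 1).
 { assert (E : Y ^ s * x ^ s * p ^ (2 * tri s + m * s) * p ^ s = p ^ s).
   { rewrite <- Cmult_assoc, <- Cpow_add_r. replace (2 * tri s + m * s + s)%nat with ((m + s) * s)%nat by (pose proof (tri_sq s); nia).
     rewrite Cpow_mult_r, <- !Cpow_mult_l, HY. reflexivity. }
   assert (p ^ s <> RtoC 0) by (apply Cpow_nz; auto).
   transitivity (Y ^ s * x ^ s * p ^ (2 * tri s + m * s) * p ^ s / p ^ s). cfield. auto.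
   rewrite E. cfield. auto. }
 replace (2 * tri s + m * s)%nat with (tri s + tri s + m * s)%nat in B by lia. rewrite !Cpow_add_r in B.
 rewrite tri_add, !Cpow_add_r.
 transitivity (p ^ tri m * Y ^ m * RtoC 1). cring. rewrite <- B. cring.
Qed.

Lemma jtp_fin p z x n : p <> RtoC 0 -> z <> RtoC 0 -> z * x = p ->
  qp (- z) p n * qp (- x) p n =
  Csum (fun k => G p (2 * n) (n + k) * (z ^ k * p ^ tri k)) (S n) +
  Csum (fun j => if Nat.ltb j n then G p (2 * n) (n - S j) * (x ^ S j * p ^ tri (S j)) else RtoC 0) (S n).
Proof. intros Hp Hz Hzx.
 assert (Hpn : p ^ n <> RtoC 0) by (apply Cpow_nz; auto).
 set (Y := z / p ^ n).
 assert (FY : Y * p ^ n = z) by (unfold Y; cfield; auto).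
 assert (HY0 : Y <> RtoC 0). { intro E. apply Hz. rewrite <- FY. rewrite E. cring. }
 clearbody Y. set (W := Y ^ n * p ^ tri n).
 assert (HW : W <> RtoC 0) by (unfold W; apply Cmult_neq_0; apply Cpow_nz; auto).
 assert (Qb := qbin p Y (2 * n)).
 assert (Ea : qp (- Y) p (2 * n) = qp (- Y) p n * qp (- z) p n).
 { unfold qp. replace (2 * n)%nat with (n + n)%nat by lia. rewrite Cprod_split. f_equal.
   apply Cprod_ext. intros k _. rewrite Cpow_add_r, <- FY. cring. }
 assert (Eb : qp (- Y) p n = qp (- x) p n * W).
 { unfold qp. rewrite Cprod_rev.
   rewrite (Cprod_ext _ (fun j => (RtoC 1 - - x * p ^ j) * (Y * p ^ (n - S j)))).
   - rewrite Cprod_mul. f_equal. unfold W. rewrite Cprod_mul, Cprod_const. f_equal.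
     rewrite <- Cprod_pow, (Cprod_rev (fun j => p ^ j)). reflexivity.
   - intros j Hj. assert (E1 : Y * x * p ^ (n - S j) * p ^ j = RtoC 1).
     { apply (Cmult_eq_reg_l p); auto. transitivity (Y * x * p ^ n).
       assert (Pn : p ^ n = p * (p ^ (n - S j) * p ^ j)). { rewrite <- Cpow_add_r, <- Cpow_S. f_equal. lia. }
       rewrite Pn. cring.
       transitivity (Y * p ^ n * x). cring. rewrite FY, Hzx. cring. }
     transitivity (RtoC 1 + Y * p ^ (n - S j)). generalize (n - S j)%nat. intros e. cring.
     transitivity (Y * p ^ (n - S j) + Y * x * p ^ (n - S j) * p ^ j). rewrite E1. cring.
     generalize (n - S j)%nat. intros e. cring. }
 assert (Ed : Csum (fun k => G p (2 * n) k * p ^ tri k * Y ^ k) (S (2 * n)) =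
   W * (Csum (fun k => G p (2 * n) (n + k) * (z ^ k * p ^ tri k)) (S n) +
   Csum (fun j => if Nat.ltb j n then G p (2 * n) (n - S j) * (x ^ S j * p ^ tri (S j)) else RtoC 0) (S n))).
 { replace (S (2 * n)) with (n + S n)%nat by lia. rewrite Csum_split.
   rewrite Cmult_plus_distr_l, Cplus_comm. f_equal.
   - rewrite <- Csum_scal. apply Csum_ext. intros k _. unfold W.
     transitivity (G p (2 * n) (n + k) * (p ^ tri (n + k) * Y ^ (n + k))). cring.
     rewrite term_id1 with (z := z) by auto. cring.
   - rewrite Csum_trunc by lia. rewrite <- Csum_scal. rewrite Csum_rev. apply Csum_ext. intros j Hj. unfold W.
     transitivity (G p (2 * n) (n - S j) * (p ^ tri (n - S j) * Y ^ (n - S j))). cring.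
     rewrite (term_id2 p Y x (n - S j) (S j)); auto.
     + replace (n - S j + S j)%nat with n by lia. cring.
     + replace (n - S j + S j)%nat with n by lia. transitivity (Y * p ^ n * x). cring. rewrite FY. auto. }
 rewrite Ea, Eb, Ed in Qb.
 apply (Cmult_eq_reg_l W); auto. rewrite <- Qb. cring.
Qed.

Open Scope C_scope.

Lemma tannery (u : nat -> nat -> C) (w : nat -> C) c L K s :
  (0 <= s < 1)%R -> (0 <= K)%R ->
  (forall n k, (k <= n)%nat -> Cmod (u n k) <= K * s ^ k) ->
  (forall k, Cmod (w k) <= s ^ k) ->
  (forall k, cv (fun n => u n k) (c * w k)) ->
  cv (Csum w) L ->
  cv (fun n => Csum (u n) (S n)) (c * L).
Proof. intros Hs HK Hu Hw Hl HL.
 set (f := fun n k => u n k - c * w k).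
 assert (HD : cv (fun n => Csum (f n) (S n)) (RtoC 0)).
 { intros eps He. set (B := (K + Cmod c)%R). assert (HB : (0 <= B)%R) by (unfold B; pose proof (Cmod_ge_0 c); lra).
   destruct (Kpow_small (B / (1 - s)) s Hs (eps / 2)) as [K0 HK0]. lra. specialize (HK0 K0 (le_n K0)).
   assert (Hh : cv (fun n => Csum (f n) K0) (Csum (fun _ => RtoC 0) K0)).
   { apply cv_Csum. intros k _. unfold f. replace (RtoC 0) with (c * w k - c * w k) by cring. apply cv_sub. apply Hl. apply cv_const. }
   rewrite Csum_zero in Hh. destruct (Hh (eps / 2)%R) as [N1 H1]. lra.
   exists (max N1 K0). intros n Hn. replace (S n) with (K0 + (S n - K0))%nat by lia. rewrite Csum_split.
   replace (Csum (f n) K0 + Csum (fun k => f n (K0 + k)%nat) (S n - K0) - RtoC 0) with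
     ((Csum (f n) K0 - RtoC 0) + Csum (fun k => f n (K0 + k)%nat) (S n - K0)) by cring.
   eapply Rle_lt_trans. apply Cmod_triangle.
   assert (Cmod (Csum (f n) K0 - RtoC 0) < eps / 2)%R by (apply H1; lia).
   assert (Cmod (Csum (fun k => f n (K0 + k)%nat) (S n - K0)) <= B * s ^ K0 / (1 - s))%R.
   { eapply Rle_trans. apply Cmod_Csum. eapply Rle_trans. 2:{ apply (geom_le2 B s K0 (S n - K0)); auto. }
     apply Rs_le. intros k Hk. unfold f. eapply Rle_trans. apply Cmod_triangle. rewrite Cmod_opp, Cmod_mult.
     assert (Cmod (u n (K0 + k)%nat) <= K * s ^ (K0 + k))%R by (apply Hu; lia).
     assert (Cmod c * Cmod (w (K0 + k)%nat) <= Cmod c * s ^ (K0 + k))%R by (apply Rmult_le_compat_l; [apply Cmod_ge_0| apply Hw]).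
     unfold B. lra. }
   replace (B / (1 - s) * s ^ K0)%R with (B * s ^ K0 / (1 - s))%R in HK0 by (field; lra). lra. }
 assert (HW : cv (fun n => c * Csum w (S n)) (c * L)).
 { apply cv_scal. apply (cv_comp _ _ S HL). intros N. exists N. intros; lia. }
 apply (cv_ext (fun n => Csum (f n) (S n) + c * Csum w (S n))).
 { exists O. intros n _. unfold f. rewrite Csum_sub, Csum_scal. cring. }
 replace (c * L) with (RtoC 0 + c * L) by cring. apply cv_add; auto.
Qed.

Open Scope C_scope.

Lemma G_bound p Ku cl : (forall m, Cmod (qp p p m) <= Ku) -> (0 < cl)%R -> (forall m, cl <= Cmod (qp p p m)) ->
  forall N k, (k <= N)%nat -> (Cmod (G p N k) <= Ku / (cl * cl))%R.
Proof. intros HU Hc HL N k Hk. assert (E := G_closed p N k (N - k) ltac:(lia)).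
 assert (E2 : (Cmod (G p N k) * (Cmod (qp p p k) * Cmod (qp p p (N - k))) = Cmod (qp p p N))%R).
 { rewrite <- E, !Cmod_mult. ring. }
 assert (H1 := HL k). assert (H2 := HL (N - k)%nat). assert (H3 := HU N). pose proof (Cmod_ge_0 (G p N k)).
 apply (Rmult_le_reg_r (cl * cl)). nra. unfold Rdiv. rewrite Rmult_assoc, Rinv_l, Rmult_1_r by nra.
 assert (Cmod (G p N k) * (cl * cl) <= Cmod (G p N k) * (Cmod (qp p p k) * Cmod (qp p p (N - k))))%R.
 { apply Rmult_le_compat_l; auto. apply Rmult_le_compat; lra. }
 lra. Qed.

Lemma tends_inf_ok (a : nat -> nat) N0 : (forall n, (n >= N0)%nat -> (a n >= n - N0)%nat) ->
  forall N, exists M, forall n, (n >= M)%nat -> (a n >= N)%nat.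
Proof. intros H N. exists (N + N0)%nat. intros n Hn. specialize (H n ltac:(lia)). lia. Qed.

Lemma G_lim p Pp (a b : nat -> nat) N0 : Cmod p < 1 -> cv (qp p p) Pp -> Pp <> RtoC 0 ->
  (forall n, (n >= N0)%nat -> (a n + b n = 2 * n)%nat) ->
  (forall n, (n >= N0)%nat -> (a n >= n - N0)%nat) -> (forall n, (n >= N0)%nat -> (b n >= n - N0)%nat) ->
  cv (fun n => G p (2 * n) (a n)) (/ Pp).
Proof. intros Hp HP HP0 Hab Ha Hb.
 destruct (qp_lower p p Hp Hp) as [cl [Hcl Hlow]].
 assert (Hnz : forall m, qp p p m <> RtoC 0). { intros m E. specialize (Hlow m). rewrite E, Cmod_0 in Hlow. lra. }
 apply (cv_ext (fun n => qp p p (2 * n) * / (qp p p (a n) * qp p p (b n)))).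
 { exists N0. intros n Hn. rewrite <- (G_closed p (2 * n) (a n) (b n)) by auto. cfield. split; auto. }
 replace (/ Pp) with (Pp * / (Pp * Pp)) by (cfield; auto).
 apply cv_mul. apply (cv_comp _ _ (fun n => 2 * n)%nat HP). intros N. exists N. intros; lia.
 apply cv_inv. apply cv_mul. apply (cv_comp _ _ a HP). apply (tends_inf_ok a N0 Ha).
 apply (cv_comp _ _ b HP). apply (tends_inf_ok b N0 Hb). apply Cmult_neq_0; auto. Qed.

Lemma jtp p z x (Pp Pz Px Lz Lx : C) s :
  Cmod p < 1 -> p <> RtoC 0 -> z <> RtoC 0 -> z * x = p -> (0 <= s < 1)%R ->
  (forall k, Cmod (z ^ k * p ^ tri k) <= s ^ k) -> (forall k, Cmod (x ^ S k * p ^ tri (S k)) <= s ^ k) ->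
  cv (qp p p) Pp -> cv (qp (- z) p) Pz -> cv (qp (- x) p) Px ->
  cv (Csum (fun k => z ^ k * p ^ tri k)) Lz -> cv (Csum (fun k => x ^ S k * p ^ tri (S k))) Lx ->
  Lz + Lx = Pp * Pz * Px.
Proof. intros Hp Hp0 Hz Hzx Hs Bz Bx HPp HPz HPx HLz HLx.
 assert (HPp0 : Pp <> RtoC 0) by (apply (qp_lim_nonzero p p); auto).
 destruct (qp_upper p p Hp) as [Ku [HKu HU]]. destruct (qp_lower p p Hp Hp) as [cl [Hcl HL]].
 set (K := (Ku / (cl * cl))%R). assert (HK : (0 <= K)%R) by (unfold K; apply Rlt_le, Rdiv_lt_0_compat; nra).
 assert (GB := G_bound p Ku cl HU Hcl HL).
 assert (T1 : cv (fun n => Csum (fun k => G p (2 * n) (n + k) * (z ^ k * p ^ tri k)) (S n)) (/ Pp * Lz)).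
 { apply (tannery _ (fun k => z ^ k * p ^ tri k) _ _ K s); auto.
   - intros n k Hk. rewrite Cmod_mult. apply Rmult_le_compat; auto using Cmod_ge_0. apply GB. lia.
   - intros k. apply cv_mul; [|apply cv_const]. apply (G_lim p Pp (fun n => n + k)%nat (fun n => n - k)%nat k); auto; intros; lia. }
 assert (T2 : cv (fun n => Csum (fun j => if Nat.ltb j n then G p (2 * n) (n - S j) * (x ^ S j * p ^ tri (S j)) else RtoC 0) (S n)) (/ Pp * Lx)).
 { apply (tannery _ (fun k => x ^ S k * p ^ tri (S k)) _ _ K s); auto.
   - intros n k Hk. destruct (Nat.ltb_spec k n). rewrite Cmod_mult. apply Rmult_le_compat; auto using Cmod_ge_0. apply GB. lia.
     rewrite Cmod_0. apply Rmult_le_pos; auto. apply pow_le; lra.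
   - intros k. apply (cv_ext (fun n => G p (2 * n) (n - S k) * (x ^ S k * p ^ tri (S k)))).
     exists (S k). intros n Hn. destruct (Nat.ltb_spec k n); auto; lia.
     apply cv_mul; [|apply cv_const]. apply (G_lim p Pp (fun n => n - S k)%nat (fun n => n + S k)%nat (S k)); auto; intros; lia. }
 assert (T := cv_add _ _ _ _ T1 T2).
 apply (cv_ext _ (fun n => qp (- z) p n * qp (- x) p n)) in T.
 2:{ exists O. intros n _. symmetry. apply jtp_fin; auto. }
 assert (U := cv_unique _ _ _ T (cv_mul _ _ _ _ HPz HPx)).
 rewrite <- Cmult_assoc, <- U. cfield. auto.
Qed.

Open Scope C_scope.

Lemma series_conv (w : nat -> C) K s : (0 <= s < 1)%R -> (0 <= K)%R -> (forall k, Cmod (w k) <= K * s ^ k) ->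
  exists L, cv (Csum w) L.
Proof. intros Hs HK H. destruct (cplx_geom_cauchy (Csum w) K s Hs HK) as [L [HL _]].
 intros n. rewrite Csum_S. replace (Csum w n + w n - Csum w n) with (w n) by cring. auto. exists L; auto. Qed.

Lemma Cprod_pair f N : Cprod f (2 * N) = Cprod (fun K => f (2*K)%nat * f (S (2*K))) N.
Proof. induction N. reflexivity. replace (2 * S N)%nat with (S (S (2*N))) by lia.
 rewrite !Cprod_S, IHN. cring. Qed.

Lemma pow_le_mono r a b : (0 <= r <= 1)%R -> (a <= b)%nat -> (r ^ b <= r ^ a)%R.
Proof. intros Hr Hab. replace b with (a + (b - a))%nat by lia. rewrite pow_add.
 assert (0 <= r ^ a)%R by (apply pow_le; lra). assert (r ^ (b - a) <= 1)%R by (apply pow_le1; lra).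
 assert (0 <= r ^ (b - a))%R by (apply pow_le; lra). nra. Qed.

Lemma pow2k (q : C) k : q ^ (2 * k) = q ^ k * q ^ k.
Proof. replace (2 * k)%nat with (k + k)%nat by lia. apply Cpow_add_r. Qed.

Lemma tri_ge k : (k <= tri (S k))%nat. Proof. simpl. lia. Qed.

Lemma cv_double u l : cv u l -> cv (fun n => u (2 * n)%nat) l.
Proof. intros H. apply (cv_comp _ _ (fun n => 2 * n)%nat H). intros N. exists N. intros; lia. Qed.

Lemma gaussA q A P1 P2 : Cmod q < 1 ->
  cv (Csum (fun k => q ^ tri (S k))) A -> cv (qp (q * q) (q * q)) P1 -> cv (qp q (q * q)) P2 ->
  A * P2 = P1.
Proof. intros Hq HA H1 H2.
 assert (Hqq : Cmod (q * q) < 1) by (rewrite Cmod_mult; pose proof (Cmod_ge_0 q); nra).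
 destruct (Ceq_dec q (RtoC 0)) as [E|Hq0].
 - subst q. assert (P1 = RtoC 1).
   { apply (cv_unique _ _ _ H1). apply (cv_ext (fun _ => RtoC 1)). exists O. intros n _.
     unfold qp. induction n. reflexivity. rewrite Cprod_S, <- IHn. cring. apply cv_const. }
   assert (P2 = RtoC 1).
   { apply (cv_unique _ _ _ H2). apply (cv_ext (fun _ => RtoC 1)). exists O. intros n _.
     unfold qp. induction n. reflexivity. rewrite Cprod_S, <- IHn. cring. apply cv_const. }
   assert (A = RtoC 1).
   { apply (cv_unique _ _ _ HA). apply (cv_ext (fun _ => RtoC 1)). exists 1%nat. intros n Hn.
     destruct n. lia. rewrite Csum_shift. rewrite Csum_zero_ext. simpl. cring.
     intros k _. cbv beta. replace (tri (S (S k))) with (S (tri k + k + k)) by (simpl; lia). simpl. cring. apply cv_const. }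
   subst. cring.
 - set (r := Cmod q). assert (Hr : (0 <= r < 1)%R) by (split; [apply Cmod_ge_0| auto]).
   destruct (qp_conv q q Hq) as [Pq HPq]. destruct (qp_conv (- q) q Hq) as [Pmq HPmq].
   destruct (qp_conv (- RtoC 1) q Hq) as [Pm1 HPm1].
   assert (J := jtp q q (RtoC 1) Pq Pmq Pm1 A A r Hq Hq0 Hq0 ltac:(cring) Hr).
   assert (Bz : forall k, Cmod (q ^ k * q ^ tri k) <= r ^ k).
   { intros k. rewrite <- Cpow_add_r, Cmod_pow. apply pow_le_mono. lra. lia. }
   assert (Bx : forall k, Cmod (RtoC 1 ^ S k * q ^ tri (S k)) <= r ^ k).
   { intros k. rewrite Cpow_1_l, Cmult_1_l, Cmod_pow. apply pow_le_mono. lra. apply tri_ge. }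
   assert (HA1 : cv (Csum (fun k => q ^ k * q ^ tri k)) A).
   { apply (cv_ext (Csum (fun k => q ^ tri (S k)))); auto. exists O. intros n _. apply Csum_ext. intros k _.
     rewrite <- Cpow_add_r. simpl. f_equal. lia. }
   assert (HA2 : cv (Csum (fun k => RtoC 1 ^ S k * q ^ tri (S k))) A).
   { apply (cv_ext (Csum (fun k => q ^ tri (S k)))); auto. exists O. intros n _. apply Csum_ext. intros k _.
     rewrite Cpow_1_l. cring. }
   specialize (J Bz Bx HPq HPmq HPm1 HA1 HA2).
   assert (EPm1 : Pm1 = RtoC 2 * Pmq).
   { apply (cv_unique (fun n => qp (- RtoC 1) q (S n))). apply (cv_comp _ _ S HPm1). intros N. exists N. intros; lia.
     apply (cv_ext (fun n => RtoC 2 * qp (- q) q n)). exists O. intros n _. unfold qp. rewrite Cprod_shift.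
     simpl Cpow. f_equal. cring. apply Cprod_ext. intros k _. simpl. cring. apply cv_scal; auto. }
   assert (HPq0 : Pq <> RtoC 0) by (apply (qp_lim_nonzero q q); auto).
   assert (E1 : P1 = Pq * Pmq).
   { apply (cv_unique _ _ _ H1). apply (cv_ext (fun n => qp q q n * qp (- q) q n)).
     exists O. intros n _. unfold qp. rewrite <- Cprod_mul. apply Cprod_ext. intros k _. rewrite Cpow_mult_l. cring.
     apply cv_mul; auto. }
   assert (E2 : Pq = P2 * P1).
   { apply (cv_unique _ _ _ (cv_double _ _ HPq)). apply (cv_ext (fun n => qp q (q * q) n * qp (q * q) (q * q) n)).
     exists O. intros n _. unfold qp. rewrite Cprod_pair, <- Cprod_mul. apply Cprod_ext. intros k _.
     rewrite Cpow_S, !pow2k, Cpow_mult_l. generalize (q ^ k). intro t. cring.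
     apply cv_mul; auto. }
   rewrite EPm1 in J. rewrite E1. rewrite E1 in E2.
   assert (E3 : P2 * Pmq = RtoC 1). { apply (Cmult_eq_reg_l Pq); auto. rewrite E2 at 2. cring. }
   assert (EA : A = Pq * Pmq * Pmq).
   { apply (Cmult_eq_reg_l (RtoC 2)). intro E. injection E. lra. rewrite <- (Cmult_1_l A) at 1.
     transitivity (A + A). cring. rewrite J. cring. }
   rewrite EA. transitivity (Pq * Pmq * (P2 * Pmq)). cring. rewrite E3. cring.
Qed.

Open Scope C_scope.

Lemma qp_zero_lim a P : cv (qp (a * RtoC 0) (RtoC 0 * RtoC 0)) P -> P = RtoC 1.
Proof. intros H. apply (cv_unique _ _ _ H). apply (cv_ext (fun _ => RtoC 1)). exists O. intros n _.
 unfold qp. induction n. reflexivity. rewrite Cprod_S, <- IHn. cring. apply cv_const. Qed.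

Lemma gaussB q B1 B2 P1 P3 : Cmod q < 1 ->
  cv (Csum (fun k => (- (q * q)) ^ k * ((q * q) * (q * q)) ^ tri k)) B1 ->
  cv (Csum (fun k => (- (q * q)) ^ S k * ((q * q) * (q * q)) ^ tri (S k))) B2 ->
  cv (qp (q * q) (q * q)) P1 -> cv (qp (- (q * q)) (q * q)) P3 -> (B1 + B2) * P3 = P1.
Proof. intros Hq HB1 HB2 H1 H3.
 assert (Hqq : Cmod (q * q) < 1) by (rewrite Cmod_mult; pose proof (Cmod_ge_0 q); nra).
 destruct (Ceq_dec q (RtoC 0)) as [E|Hq0].
 - subst q. assert (P1 = RtoC 1).
   { apply (cv_unique _ _ _ H1). apply (cv_ext (fun _ => RtoC 1)). exists O. intros n _.
     unfold qp. induction n. reflexivity. rewrite Cprod_S, <- IHn. cring. apply cv_const. }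
   assert (P3 = RtoC 1).
   { apply (cv_unique _ _ _ H3). apply (cv_ext (fun _ => RtoC 1)). exists O. intros n _.
     unfold qp. induction n. reflexivity. rewrite Cprod_S, <- IHn. cring. apply cv_const. }
   assert (B1 = RtoC 1).
   { apply (cv_unique _ _ _ HB1). apply (cv_ext (fun _ => RtoC 1)). exists 1%nat. intros n Hn.
     destruct n. lia. rewrite Csum_shift. rewrite Csum_zero_ext. simpl. cring.
     intros k _. simpl. cring. apply cv_const. }
   assert (B2 = RtoC 0).
   { apply (cv_unique _ _ _ HB2). apply (cv_ext (fun _ => RtoC 0)). exists O. intros n _.
     rewrite Csum_zero_ext. reflexivity. intros k _. simpl. cring. apply cv_const. }
   subst. cring.
 - set (r := Cmod q). assert (Hr : (0 <= r < 1)%R) by (split; [apply Cmod_ge_0| auto]).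
   set (p := (q * q) * (q * q)). set (z := - (q * q)).
   assert (Hp : Cmod p < 1) by (unfold p; rewrite Cmod_mult; pose proof (Cmod_ge_0 (q * q)); nra).
   assert (Hp0 : p <> RtoC 0) by (unfold p; repeat apply Cmult_neq_0; auto).
   assert (Hz0 : z <> RtoC 0). { intro E. apply (Cmult_neq_0 q q Hq0 Hq0). transitivity (- z). unfold z; cring. rewrite E. cring. }
   destruct (qp_conv p p Hp) as [Q4 HQ4]. destruct (qp_conv (- z) p Hp) as [R2 HR2].
   assert (Hrr : (0 <= r * r <= r)%R) by nra.
   assert (Bz : forall k, Cmod (z ^ k * p ^ tri k) <= r ^ k).
   { intros k. unfold z, p. rewrite Cmod_mult, !Cmod_pow, Cmod_opp, !Cmod_mult. fold r.
     assert ((r * r) ^ k <= r ^ k)%R by (apply pow_incr; lra).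
     assert (0 <= (r * r * (r * r)) ^ tri k <= 1)%R by (split; [apply pow_le; nra| apply pow_le1; nra]).
     assert (0 <= (r * r) ^ k)%R by (apply pow_le; nra). nra. }
   assert (Bx : forall k, Cmod (z ^ S k * p ^ tri (S k)) <= r ^ k).
   { intros k. eapply Rle_trans. apply Bz. apply pow_le_mono; [lra| lia]. }
   assert (J := jtp p z z Q4 R2 R2 B1 B2 r Hp Hp0 Hz0 ltac:(unfold z, p; cring) Hr Bz Bx HQ4 HR2 HR2 HB1 HB2).
   assert (HP10 : P1 <> RtoC 0) by (apply (qp_lim_nonzero (q * q) (q * q)); auto).
   assert (E1 : P1 = R2 * Q4).
   { apply (cv_unique _ _ _ (cv_double _ _ H1)). apply (cv_ext (fun n => qp (- z) p n * qp p p n)).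
     exists O. intros n _. unfold qp. rewrite Cprod_pair, <- Cprod_mul. apply Cprod_ext. intros k _.
     unfold z, p. rewrite Cpow_S, !pow2k, (Cpow_mult_l (q * q) (q * q)). generalize ((q * q) ^ k). intro t. cring.
     apply cv_mul; auto. }
   assert (E2 : Q4 = P1 * P3).
   { apply (cv_unique _ _ _ HQ4). apply (cv_ext (fun n => qp (q * q) (q * q) n * qp (- (q * q)) (q * q) n)).
     exists O. intros n _. unfold qp. rewrite <- Cprod_mul. apply Cprod_ext. intros k _.
     unfold p. rewrite (Cpow_mult_l (q * q) (q * q)). generalize ((q * q) ^ k). intro t. cring.
     apply cv_mul; auto. }
   assert (E3 : R2 * P3 = RtoC 1).
   { apply (Cmult_eq_reg_l P1); auto. transitivity (R2 * (P1 * P3)). cring. rewrite <- E2, <- E1. cring. }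
   rewrite J, E1. transitivity (Q4 * R2 * (R2 * P3)). cring. rewrite E3. cring.
Qed.

Open Scope C_scope.

Lemma CpowZ_nat z k : CpowZ z (Z.of_nat k) = z ^ k.
Proof. destruct k. reflexivity. simpl. rewrite SuccNat2Pos.id_succ. apply pow_eq. Qed.
Lemma CpowZ_neg z b : CpowZ z (- Z.of_nat (S b)) = / (z ^ S b).
Proof. simpl. rewrite SuccNat2Pos.id_succ. rewrite inv_eq, pow_eq. reflexivity. Qed.

Lemma m1_sq k : (- RtoC 1) ^ k * (- RtoC 1) ^ k = RtoC 1.
Proof. induction k. simpl. cring. simpl. transitivity ((- RtoC 1) ^ k * (- RtoC 1) ^ k). cring. auto. Qed.
Lemma m1_inv k : / ((- RtoC 1) ^ k) = (- RtoC 1) ^ k.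
Proof. assert (H := m1_sq k). assert (Hn : (- RtoC 1) ^ k <> RtoC 0).
 { intro E. rewrite E in H. assert (H1 : RtoC 1 = RtoC 0) by (rewrite <- H; cring). injection H1. lra. }
 transitivity (/ ((- RtoC 1) ^ k) * ((- RtoC 1) ^ k * (- RtoC 1) ^ k)). rewrite H. cring.
 cfield. auto. Qed.
Lemma Cmod_m1pow k : Cmod ((- RtoC 1) ^ k) = 1%R.
Proof. rewrite Cmod_pow, Cmod_opp, Cmod_1. apply pow1. Qed.

Lemma tp_eval q n m e : Z.of_nat e = expo (Z.of_nat n) (Z.of_nat m) ->
  term q (Z.of_nat n) (Z.of_nat m) = (- RtoC 1) ^ m * q ^ e.
Proof. intros H. unfold term. rewrite <- H, mul_eq, !CpowZ_nat. reflexivity. Qed.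
Lemma tn_eval q a b e : Z.of_nat e = expo (- Z.of_nat (S a)) (- Z.of_nat (S b)) ->
  term q (- Z.of_nat (S a)) (- Z.of_nat (S b)) = (- RtoC 1) ^ S b * q ^ e.
Proof. intros H. unfold term. rewrite <- H, mul_eq, CpowZ_nat, CpowZ_neg. f_equal. apply m1_inv. Qed.

Lemma expo_eq n m h : (n * (n + 3) = 2 * h)%Z -> expo n m = (h + 2 * n * m + 2 * m * (m + 1))%Z.
Proof. intros H. unfold expo. rewrite H. rewrite Z.mul_comm, Z.div_mul by lia. reflexivity. Qed.

Lemma nat_parity n : exists k, n = (2 * k)%nat \/ n = S (2 * k).
Proof. destruct (Nat.Even_or_Odd n) as [[k Hk]|[k Hk]]; exists k; lia. Qed.

Lemma tp_exists n m : exists e, Z.of_nat e = expo (Z.of_nat n) (Z.of_nat m) /\ (n + 2 * m <= e)%nat.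
Proof. destruct (nat_parity n) as [k [Hk|Hk]]; subst n.
 - rewrite (expo_eq _ _ (Z.of_nat k * (2 * Z.of_nat k + 3))) by lia.
   exists (Z.to_nat (Z.of_nat k * (2 * Z.of_nat k + 3) + 2 * Z.of_nat (2 * k) * Z.of_nat m + 2 * Z.of_nat m * (Z.of_nat m + 1))).
   split. rewrite Z2Nat.id by nia. reflexivity. nia.
 - rewrite (expo_eq _ _ ((2 * Z.of_nat k + 1) * (Z.of_nat k + 2))) by lia.
   exists (Z.to_nat ((2 * Z.of_nat k + 1) * (Z.of_nat k + 2) + 2 * Z.of_nat (S (2 * k)) * Z.of_nat m + 2 * Z.of_nat m * (Z.of_nat m + 1))).
   split. rewrite Z2Nat.id by nia. reflexivity. nia.
Qed.

Lemma tn_exists a b : exists e, Z.of_nat e = expo (- Z.of_nat (S a)) (- Z.of_nat (S b)) /\ (a + 2 * b <= e)%nat.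
Proof. destruct (nat_parity a) as [k [Hk|Hk]]; subst a.
 - rewrite (expo_eq _ _ ((2 * Z.of_nat k + 1) * (Z.of_nat k - 1))) by lia.
   exists (Z.to_nat ((2 * Z.of_nat k + 1) * (Z.of_nat k - 1) + 2 * (- Z.of_nat (S (2 * k))) * (- Z.of_nat (S b)) + 2 * (- Z.of_nat (S b)) * (- Z.of_nat (S b) + 1))).
   split. rewrite Z2Nat.id by nia. reflexivity. nia.
 - rewrite (expo_eq _ _ ((Z.of_nat k + 1) * (2 * Z.of_nat k - 1))) by lia.
   exists (Z.to_nat ((Z.of_nat k + 1) * (2 * Z.of_nat k - 1) + 2 * (- Z.of_nat (S (S (2 * k)))) * (- Z.of_nat (S b)) + 2 * (- Z.of_nat (S b)) * (- Z.of_nat (S b) + 1))).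
   split. rewrite Z2Nat.id by nia. reflexivity. nia.
Qed.

Lemma tp_bound q n m : Cmod q < 1 -> Cmod (term q (Z.of_nat n) (Z.of_nat m)) <= Cmod q ^ (n + 2 * m).
Proof. intros Hq. destruct (tp_exists n m) as [e [He Hle]]. rewrite (tp_eval q n m e He).
 rewrite Cmod_mult, Cmod_m1pow, Rmult_1_l, Cmod_pow. apply pow_le_mono; auto. split. apply Cmod_ge_0. lra. Qed.
Lemma tn_bound q a b : Cmod q < 1 -> Cmod (term q (- Z.of_nat (S a)) (- Z.of_nat (S b))) <= Cmod q ^ (a + 2 * b).
Proof. intros Hq. destruct (tn_exists a b) as [e [He Hle]]. rewrite (tn_eval q a b e He).
 rewrite Cmod_mult, Cmod_m1pow, Rmult_1_l, Cmod_pow. apply pow_le_mono; auto. split. apply Cmod_ge_0. lra. Qed.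

Open Scope C_scope.

Lemma div2_le m r : (m < Nat.div2 r + 1)%nat <-> (2 * m <= r)%nat.
Proof. assert (Hr := Nat.div2_odd r). destruct (Nat.odd r); simpl in Hr; lia. Qed.

Lemma ind_bound (u : nat -> nat -> C) s N n m : (0 <= s < 1)%R ->
  Cmod (u n m) <= (s * s) ^ (n + 2 * m) ->
  Cmod ((if andb (Nat.ltb n N) (Nat.ltb m N) then u n m else RtoC 0) -
        (if Nat.ltb (n + 2 * m) (2 * N) then u n m else RtoC 0)) <= s ^ N * s ^ n * s ^ m.
Proof. intros Hs Hu. assert (0 <= s ^ N * s ^ n * s ^ m)%R by (repeat apply Rmult_le_pos; apply pow_le; lra).
 assert (Hb : (n + 2 * m >= N)%nat -> Cmod (u n m) <= s ^ N * s ^ n * s ^ m).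
 { intros Hge. eapply Rle_trans. apply Hu. rewrite Rpow_mult_distr, <- pow_add.
   replace ((n + 2 * m) + (n + 2 * m))%nat with ((N + n + m) + (n + 3 * m - N))%nat by lia.
   rewrite pow_add, !pow_add. assert (s ^ (n + 3 * m - N) <= 1)%R by (apply pow_le1; lra).
   assert (0 <= s ^ N * s ^ n * s ^ m)%R by auto. assert (0 <= s ^ (n + 3 * m - N))%R by (apply pow_le; lra). nra. }
 destruct (Nat.ltb_spec n N), (Nat.ltb_spec m N), (Nat.ltb_spec (n + 2 * m) (2 * N)); simpl.
 all: try (replace (u n m - u n m) with (RtoC 0) by cring; rewrite Cmod_0; lra).
 all: try (replace (RtoC 0 - RtoC 0) with (RtoC 0) by cring; rewrite Cmod_0; lra).
 all: try (replace (u n m - RtoC 0) with (u n m) by cring; apply Hb; lia).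
 all: try (replace (RtoC 0 - u n m) with (- u n m) by cring; rewrite Cmod_opp; apply Hb; lia).
Qed.

Lemma sq_tri (u : nat -> nat -> C) s N : (0 <= s < 1)%R ->
  (forall n m, Cmod (u n m) <= (s * s) ^ (n + 2 * m)) ->
  Cmod (Csum (fun n => Csum (fun m => u n m) N) N -
        Csum (fun r => Csum (fun m => u (r - 2 * m)%nat m) (Nat.div2 r + 1)) (2 * N)) <=
  s ^ N * (/ (1 - s) * / (1 - s)).
Proof. intros Hs Hu. set (M := (2 * N)%nat).
 assert (E1 : Csum (fun n => Csum (fun m => u n m) N) N =
   Csum (fun n => Csum (fun m => if andb (Nat.ltb n N) (Nat.ltb m N) then u n m else RtoC 0) M) M).
 { rewrite <- (Csum_trunc _ N M) by (unfold M; lia). apply Csum_ext. intros n _.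
   destruct (Nat.ltb_spec n N); simpl. rewrite Csum_trunc. reflexivity. unfold M; lia.
   symmetry. apply Csum_zero_ext. auto. }
 assert (E2 : Csum (fun r => Csum (fun m => u (r - 2 * m)%nat m) (Nat.div2 r + 1)) M =
   Csum (fun n => Csum (fun m => if Nat.ltb (n + 2 * m) M then u n m else RtoC 0) M) M).
 { transitivity (Csum (fun r => Csum (fun m => if Nat.leb (2 * m) r then u (r - 2 * m)%nat m else RtoC 0) M) M).
   { apply Csum_ext. intros r Hr. rewrite <- (Csum_trunc _ (Nat.div2 r + 1) M).
     apply Csum_ext. intros m _. destruct (Nat.ltb_spec m (Nat.div2 r + 1)), (Nat.leb_spec (2 * m) r); auto.
     apply div2_le in H; lia. apply div2_le in H0; lia.
     assert (Hd := Nat.div2_odd r). destruct (Nat.odd r); simpl in Hd; lia. }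
   rewrite Csum_swap. rewrite (Csum_swap (fun n m => if Nat.ltb (n + 2 * m) M then u n m else RtoC 0)).
   apply Csum_ext. intros m _. apply (Csum_shiftind (fun n => u n m) (2 * m) M). }
 rewrite E1, E2. rewrite <- Csum_sub.
 rewrite (Csum_ext _ (fun n => Csum (fun m => (if andb (Nat.ltb n N) (Nat.ltb m N) then u n m else RtoC 0) -
      (if Nat.ltb (n + 2 * m) M then u n m else RtoC 0)) M)) by (intros; rewrite Csum_sub; reflexivity).
 eapply Rle_trans. apply Cmod_Csum.
 eapply Rle_trans. apply Rs_le. intros n _. eapply Rle_trans. apply Cmod_Csum.
 apply (Rs_le _ (fun m => s ^ N * s ^ n * s ^ m)%R). intros m _. apply ind_bound; auto.
 rewrite (Rs_ext _ (fun n => (s ^ N * s ^ n) * Rs (fun m => s ^ m) M)%R).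
 2:{ intros n _. rewrite <- Rs_scal. reflexivity. }
 rewrite (Rs_ext _ (fun n => (s ^ N * Rs (fun m => s ^ m) M) * s ^ n)%R) by (intros; ring).
 rewrite Rs_scal. rewrite Rmult_assoc. apply Rmult_le_compat_l. apply pow_le; lra.
 assert (G1 := geom_le s M Hs).
 assert (0 <= Rs (fun m => s ^ m) M)%R by (apply Rs_nonneg; intros; apply pow_le; lra).
 apply Rmult_le_compat; auto.
Qed.

Open Scope C_scope.

Lemma tel1 q e K : (K <= e)%nat ->
  (RtoC 1 + q) * Csum (fun m => (- RtoC 1) ^ m * q ^ (e - m)) (S K) = q ^ S e + (- RtoC 1) ^ K * q ^ (e - K).
Proof. induction K; intros H.
 - rewrite Csum_S, Csum_0. rewrite Nat.sub_0_r. simpl. cring.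
 - rewrite Csum_S, Cmult_plus_distr_l, IHK by lia.
   replace (e - K)%nat with (S (e - S K)) by lia. rewrite !Cpow_S. generalize (q ^ (e - S K)), ((- RtoC 1) ^ K). intros t u. cring.
Qed.

Lemma tel2 q e K :
  (RtoC 1 + q) * Csum (fun b => (- RtoC 1) ^ S b * q ^ (e + b + 1)) (S K) = - (q ^ S e + (- RtoC 1) ^ K * q ^ (e + K + 2)).
Proof. induction K.
 - rewrite Csum_S, Csum_0. replace (e + 0 + 1)%nat with (S e) by lia. replace (e + 0 + 2)%nat with (S (S e)) by lia. simpl. cring.
 - rewrite Csum_S, Cmult_plus_distr_l, IHK.
   replace (e + S K + 1)%nat with (e + K + 2)%nat by lia. replace (e + S K + 2)%nat with (S (e + K + 2)) by lia.
   rewrite !Cpow_S. generalize (q ^ (e + K + 2)), ((- RtoC 1) ^ K). intros t u. cring.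
Qed.

Definition hp q r := Csum (fun m => term q (Z.of_nat (r - 2 * m)) (Z.of_nat m)) (Nat.div2 r + 1).
Definition hn q s := Csum (fun b => term q (- Z.of_nat (S (s - 2 * b))) (- Z.of_nat (S b))) (Nat.div2 s + 1).

Lemma hp_even q K : hp q (2 * K) = Csum (fun m => (- RtoC 1) ^ m * q ^ (2 * K * K + 3 * K - m)) (S K).
Proof. unfold hp. rewrite Nat.div2_double, Nat.add_1_r. apply Csum_ext. intros m Hm. apply tp_eval.
 rewrite (expo_eq _ _ ((Z.of_nat K - Z.of_nat m) * (2 * (Z.of_nat K - Z.of_nat m) + 3))) by nia. nia. Qed.
Lemma hp_odd q K : hp q (S (2 * K)) = Csum (fun m => (- RtoC 1) ^ m * q ^ (2 * K * K + 5 * K + 2 - m)) (S K).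
Proof. unfold hp. rewrite Nat.div2_succ_double, Nat.add_1_r. apply Csum_ext. intros m Hm. apply tp_eval.
 rewrite (expo_eq _ _ ((2 * (Z.of_nat K - Z.of_nat m) + 1) * (Z.of_nat K - Z.of_nat m + 2))) by nia. nia. Qed.
Lemma hn_even q K : hn q (2 * K) = Csum (fun b => (- RtoC 1) ^ S b * q ^ (2 * K * K + 3 * K + b + 1)) (S K).
Proof. unfold hn. rewrite Nat.div2_double, Nat.add_1_r. apply Csum_ext. intros b Hb. apply tn_eval.
 rewrite (expo_eq _ _ ((2 * (Z.of_nat K - Z.of_nat b) + 1) * (Z.of_nat K - Z.of_nat b - 1))) by nia. nia. Qed.
Lemma hn_odd q K : hn q (S (2 * K)) = Csum (fun b => (- RtoC 1) ^ S b * q ^ (2 * K * K + 5 * K + 2 + b + 1)) (S K).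
Proof. unfold hn. rewrite Nat.div2_succ_double, Nat.add_1_r. apply Csum_ext. intros b Hb. apply tn_eval.
 rewrite (expo_eq _ _ ((Z.of_nat K - Z.of_nat b + 1) * (2 * (Z.of_nat K - Z.of_nat b) - 1))) by nia. nia. Qed.

Definition gK q K := RtoC 2 * q ^ tri (S (S (2 * K))) + RtoC 2 * q ^ tri (S (S (S (2 * K)))) +
  (- RtoC 1) ^ K * (q ^ (2 * K * (K + 1)) + RtoC 2 * q ^ (2 * (K + 1) * (K + 1)) + q ^ (2 * (K + 1) * (K + 2))).

Lemma hK q K : (RtoC 1 + q) * (hp q (2 * K) + hp q (S (2 * K)) - (hn q (2 * K) + hn q (S (2 * K)))) = gK q K.
Proof. rewrite hp_even, hp_odd, hn_even, hn_odd.
 set (SA := Csum (fun m => (- RtoC 1) ^ m * q ^ (2 * K * K + 3 * K - m)) (S K)).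
 set (SB := Csum (fun m => (- RtoC 1) ^ m * q ^ (2 * K * K + 5 * K + 2 - m)) (S K)).
 set (SC := Csum (fun b => (- RtoC 1) ^ S b * q ^ (2 * K * K + 3 * K + b + 1)) (S K)).
 set (SD := Csum (fun b => (- RtoC 1) ^ S b * q ^ (2 * K * K + 5 * K + 2 + b + 1)) (S K)).
 assert (A := tel1 q (2 * K * K + 3 * K) K ltac:(nia)). fold SA in A.
 assert (B := tel1 q (2 * K * K + 5 * K + 2) K ltac:(nia)). fold SB in B.
 assert (C := tel2 q (2 * K * K + 3 * K) K). fold SC in C.
 assert (D := tel2 q (2 * K * K + 5 * K + 2) K). fold SD in D.
 transitivity ((RtoC 1 + q) * SA + (RtoC 1 + q) * SB - ((RtoC 1 + q) * SC + (RtoC 1 + q) * SD)). cring.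
 rewrite A, B, C, D. unfold gK.
 assert (T1 := tri_sq (S (S (2 * K)))). assert (T2 := tri_sq (S (S (S (2 * K))))).
 replace (tri (S (S (2 * K)))) with (S (2 * K * K + 3 * K)) by nia.
 replace (tri (S (S (S (2 * K))))) with (S (2 * K * K + 5 * K + 2)) by nia.
 replace (2 * K * K + 3 * K - K)%nat with (2 * K * (K + 1))%nat by nia.
 replace (2 * K * K + 5 * K + 2 - K)%nat with (2 * (K + 1) * (K + 1))%nat by nia.
 replace (2 * K * K + 3 * K + K + 2)%nat with (2 * (K + 1) * (K + 1))%nat by nia.
 replace (2 * K * K + 5 * K + 2 + K + 2)%nat with (2 * (K + 1) * (K + 2))%nat by nia.
 generalize (q ^ S (2 * K * K + 3 * K)), (q ^ S (2 * K * K + 5 * K + 2)), (q ^ (2 * K * (K + 1))),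
   (q ^ (2 * (K + 1) * (K + 1))), (q ^ (2 * (K + 1) * (K + 2))), ((- RtoC 1) ^ K). intros. cring.
Qed.

Definition Sa q n := Csum (fun k => q ^ tri (S k)) n.
Definition Sb q N := Csum (fun k => (- (q * q)) ^ S k * ((q * q) * (q * q)) ^ tri (S k)) N.

Lemma bterm q j : (- (q * q)) ^ j * ((q * q) * (q * q)) ^ tri j = (- RtoC 1) ^ j * q ^ (2 * j * j).
Proof. replace (- (q * q)) with ((- RtoC 1) * q ^ 2) by (simpl; cring). rewrite Cpow_mult_l.
 replace ((q * q) * (q * q)) with (q ^ 4) by (simpl; cring).
 rewrite <- !Cpow_mult_r. rewrite <- Cmult_assoc, <- Cpow_add_r. f_equal. f_equal.
 pose proof (tri_sq j). nia. Qed.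

Lemma FN q N : Csum (gK q) N = RtoC 2 * (Sa q (S (2 * N)) - RtoC 1) + RtoC 1 - (- RtoC 1) ^ N * q ^ (2 * N * (N + 1)) - RtoC 2 * Sb q N.
Proof. induction N.
 - unfold Sa, Sb. rewrite !Csum_S, !Csum_0. simpl. cring.
 - rewrite Csum_S, IHN. unfold Sa, Sb. replace (S (2 * S N)) with (S (S (S (2 * N)))) by lia.
   rewrite !Csum_S. rewrite (bterm q (S N)). unfold gK.
   replace (2 * S N * (S N + 1))%nat with (2 * (N + 1) * (N + 2))%nat by lia.
   replace (2 * S N * S N)%nat with (2 * (N + 1) * (N + 1))%nat by lia.
   generalize (Csum (fun k => (- (q * q)) ^ S k * ((q * q) * (q * q)) ^ tri (S k)) N). intros.
   rewrite (Cpow_S (- RtoC 1) N).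
   generalize (Csum (fun k => q ^ tri (S k)) (2 * N)), ((- RtoC 1) ^ N), (q ^ tri (S (2 * N))), (q ^ tri (S (S (2 * N)))),
     (q ^ tri (S (S (S (2 * N))))), (q ^ (2 * N * (N + 1))), (q ^ (2 * (N + 1) * (N + 1))), (q ^ (2 * (N + 1) * (N + 2))).
   intros. cring.
Qed.

Open Scope C_scope.

Lemma qp_Ccv a b P : cv (qp a b) P -> qpoch_inf_is a b P.
Proof. intros H. apply Ccv_cv. apply (cv_ext (qp a b)); auto. exists O. intros n _. symmetry. apply qpoch_qp. Qed.

Lemma hecke q A B1 B2 : Cmod q < 1 ->
  cv (Csum (fun k => q ^ tri (S k))) A ->
  cv (Csum (fun k => (- (q * q)) ^ k * ((q * q) * (q * q)) ^ tri k)) B1 ->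
  cv (Csum (fun k => (- (q * q)) ^ S k * ((q * q) * (q * q)) ^ tri (S k))) B2 ->
  cv (partial_diff q) ((RtoC 2 * A - (B1 + B2)) / (RtoC 1 + q)).
Proof. intros Hq HA HB1 HB2. set (r := Cmod q). assert (Hr : (0 <= r < 1)%R) by (split; [apply Cmod_ge_0|auto]).
 set (s := sqrt r). assert (Hs : (0 <= s < 1)%R).
 { split. apply sqrt_pos. unfold s. rewrite <- sqrt_1. apply sqrt_lt_1_alt. lra. }
 assert (Hss : (s * s = r)%R) by (unfold s; apply sqrt_sqrt; lra).
 assert (Hq1 : RtoC 1 + q <> RtoC 0).
 { intro E. assert (q = - RtoC 1) by (transitivity (RtoC 1 + q - RtoC 1); [cring| rewrite E; cring]).
   subst r. rewrite H, Cmod_opp, Cmod_1 in Hq. lra. }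
 set (T := fun N => Csum (hp q) (2 * N) - Csum (hn q) (2 * N)).
 assert (S1 : cv (fun N => partial_diff q N - T N) (RtoC 0)).
 { apply (cv_bound _ _ (2 * (/ (1 - s) * / (1 - s)))%R s O Hs). intros N _.
   unfold partial_diff, T. match goal with |- context [Defs.Csub ?a ?b] => change (Defs.Csub a b) with (a - b) end.
   set (u1 := fun n m => term q (Z.of_nat n) (Z.of_nat m)).
   set (u2 := fun a b => term q (- Z.of_nat (S a)) (- Z.of_nat (S b))).
   assert (E1 := sq_tri u1 s N Hs). assert (E2 := sq_tri u2 s N Hs).
   specialize (E1 ltac:(intros; rewrite Hss; unfold u1; apply tp_bound; auto)).
   specialize (E2 ltac:(intros; rewrite Hss; unfold u2; apply tn_bound; auto)).
   unfold u1, u2 in E1, E2. unfold hp, hn.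
   match goal with |- Cmod (?a - ?b - (?c - ?d) - RtoC 0) <= _ =>
     replace (a - b - (c - d) - RtoC 0) with ((a - c) - (b - d)) by cring end.
   eapply Rle_trans. apply Cmod_triangle. rewrite Cmod_opp. lra. }
 assert (S2 : forall N, (RtoC 1 + q) * T N = Csum (gK q) N).
 { intros N. unfold T. rewrite !Csum_pair, <- Csum_sub, <- Csum_scal. apply Csum_ext. intros K _.
   rewrite <- hK. f_equal. }
 assert (EB : B1 = RtoC 1 + B2).
 { apply (cv_unique _ _ _ (cv_comp _ _ S HB1 ltac:(intros N; exists N; intros; lia))).
   apply (cv_ext (fun n => RtoC 1 + Csum (fun k => (- (q * q)) ^ S k * ((q * q) * (q * q)) ^ tri (S k)) n)).
   exists O. intros n _. rewrite Csum_shift. simpl. cring.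
   apply cv_add; auto. apply cv_const. }
 assert (Hc : cv (fun N => (- RtoC 1) ^ N * q ^ (2 * N * (N + 1))) (RtoC 0)).
 { apply (cv_bound _ _ 1%R r O Hr). intros N _. replace (_ - RtoC 0) with ((- RtoC 1) ^ N * q ^ (2 * N * (N + 1))) by cring.
   rewrite Cmod_mult, Cmod_m1pow, Cmod_pow. fold r. rewrite !Rmult_1_l. apply pow_le_mono. lra. nia. }
 assert (S3 : cv (fun N => Csum (gK q) N) (RtoC 2 * A - (B1 + B2))).
 { apply (cv_ext (fun N => RtoC 2 * (Sa q (S (2 * N)) - RtoC 1) + RtoC 1 - (- RtoC 1) ^ N * q ^ (2 * N * (N + 1)) - RtoC 2 * Sb q N)).
   exists O. intros N _. symmetry. apply FN.
   replace (RtoC 2 * A - (B1 + B2)) with (RtoC 2 * (A - RtoC 1) + RtoC 1 - RtoC 0 - RtoC 2 * B2) by (rewrite EB; cring).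
   apply cv_sub. apply cv_sub. apply cv_add. apply cv_scal. apply cv_sub. 
   apply (cv_comp _ _ (fun N => S (2 * N)) HA). intros N; exists N; intros; lia. apply cv_const. apply cv_const. auto.
   apply cv_scal. auto. }
 assert (S4 : cv T ((RtoC 2 * A - (B1 + B2)) / (RtoC 1 + q))).
 { apply (cv_ext (fun N => / (RtoC 1 + q) * Csum (gK q) N)).
   exists O. intros N _. rewrite <- S2. cfield. auto.
   replace ((RtoC 2 * A - (B1 + B2)) / (RtoC 1 + q)) with (/ (RtoC 1 + q) * (RtoC 2 * A - (B1 + B2))) by (cfield; auto).
   apply cv_scal. auto. }
 apply (cv_ext (fun N => (partial_diff q N - T N) + T N)). exists O. intros. cring.
 replace ((RtoC 2 * A - (B1 + B2)) / (RtoC 1 + q)) with (RtoC 0 + (RtoC 2 * A - (B1 + B2)) / (RtoC 1 + q)) by cring.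
 apply cv_add; auto.
Qed.

Open Scope C_scope.

Lemma main_aux (q : Cx) (hq : (Defs.Cnorm q < 1)%R) :
  exists P1 P2 P3 : Cx,
    Defs.qpoch_inf_is (Defs.Cmul q q) (Defs.Cmul q q) P1 /\
    Defs.qpoch_inf_is q (Defs.Cmul q q) P2 /\
    Defs.qpoch_inf_is (Defs.Copp (Defs.Cmul q q)) (Defs.Cmul q q) P3 /\
    Defs.Ccv (Defs.partial_diff q)
      (Defs.Csub (Defs.Cdiv (Defs.Cmul (Defs.RtoC 2%R) P1) (Defs.Cmul (Defs.Cadd Defs.Cone q) P2))
            (Defs.Cdiv P1 (Defs.Cmul (Defs.Cadd Defs.Cone q) P3))).
Proof.
 rewrite norm_eq in hq. set (r := Cmod q). assert (Hr : (0 <= r < 1)%R) by (split; [apply Cmod_ge_0|auto]).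
 assert (Hqq : Cmod (q * q) < 1) by (rewrite Cmod_mult; fold r; nra).
 destruct (qp_conv (q * q) (q * q) Hqq) as [P1 H1].
 destruct (qp_conv q (q * q) Hqq) as [P2 H2].
 destruct (qp_conv (- (q * q)) (q * q) Hqq) as [P3 H3].
 exists P1, P2, P3. split; [apply qp_Ccv; exact H1|]. split; [apply qp_Ccv; exact H2|]. split; [apply qp_Ccv; exact H3|].
 destruct (series_conv (fun k => q ^ tri (S k)) 1 r Hr ltac:(lra)) as [A HA].
 { intros k. rewrite Cmod_pow, Rmult_1_l. apply pow_le_mono. lra. apply tri_ge. }
 destruct (series_conv (fun k => (- (q * q)) ^ k * ((q * q) * (q * q)) ^ tri k) 1 r Hr ltac:(lra)) as [B1 HB1].
 { intros k. rewrite bterm, Cmod_mult, Cmod_m1pow, Cmod_pow, !Rmult_1_l. apply pow_le_mono. lra. nia. }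
 destruct (series_conv (fun k => (- (q * q)) ^ S k * ((q * q) * (q * q)) ^ tri (S k)) 1 r Hr ltac:(lra)) as [B2 HB2].
 { intros k. rewrite bterm, Cmod_mult, Cmod_m1pow, Cmod_pow, !Rmult_1_l. apply pow_le_mono. lra. nia. }
 assert (GA := gaussA q A P1 P2 hq HA H1 H2).
 assert (GB := gaussB q B1 B2 P1 P3 hq HB1 HB2 H1 H3).
 assert (HP2 : P2 <> RtoC 0) by (apply (qp_lim_nonzero q (q * q)); auto).
 assert (HP3 : P3 <> RtoC 0) by (apply (qp_lim_nonzero (- (q * q)) (q * q)); auto; rewrite Cmod_opp; auto).
 assert (Hq1 : RtoC 1 + q <> RtoC 0).
 { intro E. assert (q = - RtoC 1) by (transitivity (RtoC 1 + q - RtoC 1); [cring| rewrite E; cring]).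
   subst r. rewrite H, Cmod_opp, Cmod_1 in hq. lra. }
 assert (HL := hecke q A B1 B2 hq HA HB1 HB2).
 apply Ccv_cv. rewrite !div_eq.
 replace (Defs.Csub (Defs.Cmul (Defs.RtoC 2) P1 / Defs.Cmul (Defs.Cadd Defs.Cone q) P2)
     (P1 / Defs.Cmul (Defs.Cadd Defs.Cone q) P3)) with ((RtoC 2 * A - (B1 + B2)) / (RtoC 1 + q)); auto.
 change ((RtoC 2 * A - (B1 + B2)) / (RtoC 1 + q) = RtoC 2 * P1 / ((RtoC 1 + q) * P2) - P1 / ((RtoC 1 + q) * P3)).
 transitivity (RtoC 2 * (A * P2) / ((RtoC 1 + q) * P2) - ((B1 + B2) * P3) / ((RtoC 1 + q) * P3)).
 cfield. auto. rewrite GA, GB. reflexivity.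
Qed.


Import Pilot.Defs.
Close Scope C_scope.
Open Scope R_scope.

Theorem mainTheorem6 (q : Cx) (hq : Cnorm q < 1) :
  exists P1 P2 P3 : Cx,
    qpoch_inf_is (Cmul q q) (Cmul q q) P1 /\
    qpoch_inf_is q (Cmul q q) P2 /\
    qpoch_inf_is (Copp (Cmul q q)) (Cmul q q) P3 /\
    Ccv (partial_diff q)
      (Csub (Cdiv (Cmul (RtoC 2) P1) (Cmul (Cadd Cone q) P2))
            (Cdiv P1 (Cmul (Cadd Cone q) P3))).
Proof.
  exact (main_aux q hq).
Qed.
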